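(* Let $p,q$ be odd primes with $q-p=2$, and let $D=D_1\cdots D_n$ with $D_1,\dots,D_n$ distinct primes, $2\nmid D$, $p\nmid D$, $q\nmid D$; put $\widehat{D_i}=D/D_i$. Let $E=E_-:y^2=x(x-pD)(x-qD)$, and for $d\in\mathbb{Q}(S,2)$ let $C_d: dw^2=d^2+2(p+q)Ddz^2+4D^2z^4$. (A) If $d\in\mathbb{Q}(S,2)$ satisfies $p\mid d$, or $q\mid d$, or $d=-1$, then $d\notin S^{(\varphi)}(E/\mathbb{Q})$. (B$_1$) (1) $C_2(\mathbb{Q}_2)\ne\emptyset$ iff $D(D+2p+2)\equiv1\pmod{16}$; (2) for each prime $l\mid pqD$, $C_2(\mathbb{Q}_l)\ne\emptyset$ iff $(\frac{2}{l})=1$, i.e. $l\equiv1,7\pmod8$. (B$_2$) (1) $C_{-2}(\mathbb{Q}_2)\ne\emptyset$ iff $D(-D+2p+2)\equiv3\pmod{16}$; (2) for each prime $l\mid pqD$, $C_{-2}(\mathbb{Q}_l)\ne\emptyset$ iff $(\frac{-2}{l})=1$, i.e. $l\equiv1,3\pmod8$. (C$_1$) For each $1\le i\le n$: (1) $C_{D_i}(\mathbb{Q}_2)\ne\emptyset$ iff $D_i\equiv1\pmod4$; (2) for each prime $l\mid pq\widehat{D_i}$, $C_{D_i}(\mathbb{Q}_l)\ne\emptyset$ iff $(\frac{D_i}{l})=1$; (3) $C_{D_i}(\mathbb{Q}_{D_i})\ne\emptyset$ iff $(\frac{-p\widehat{D_i}}{D_i})=(\frac{-q\widehat{D_i}}{D_i})=1$.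 (C$_2$) For each $1\le i\le n$: (1) $C_{-D_i}(\mathbb{Q}_2)\ne\emptyset$ iff $D_i\equiv3\pmod4$; (2) for each prime $l\mid pq\widehat{D_i}$, $C_{-D_i}(\mathbb{Q}_l)\ne\emptyset$ iff $(\frac{-D_i}{l})=1$; (3) $C_{-D_i}(\mathbb{Q}_{D_i})\ne\emptyset$ iff $(\frac{p\widehat{D_i}}{D_i})=(\frac{q\widehat{D_i}}{D_i})=1$.
   Context: $(\frac{\cdot}{\cdot})$ is the Legendre symbol. $S=\{\infty,2,p,q,D_1,\dots,D_n\}$, $\mathbb{Q}(S,2)=\langle -1,2,p,q,D_1,\dots,D_n\rangle\subset\mathbb{Q}^\star/\mathbb{Q}^{\star2}$ with squarefree integer representatives. $\varphi:E\to E'$, $E':y^2=x^3+2(p+q)Dx^2+4D^2x$, is the $2$-isogeny $(x,y)\mapsto(y^2/x^2,\ y(pqD^2-x^2)/x^2)$, and $S^{(\varphi)}(E/\mathbb{Q})$ is the set of $d\in\mathbb{Q}(S,2)$ with $C_d(\mathbb{Q}_v)\ne\emptyset$ for all $v\in S$. *)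

(* Defs.v *)
From Stdlib Require Import ZArith Znumtheory List Reals.
Import ListNotations.
Open Scope Z_scope.

Definition prodZ (l : list Z) : Z := fold_right Z.mul 1 l.

Definition legendre_one (a l : Z) : Prop :=
  ~ (l | a) /\ exists x : Z, (l | x ^ 2 - a).

(* Weighted-homogeneous (weights 1,2,1 on z,w,t) form of
   C_d : d w^2 = d^2 + 2(p+q) D d z^2 + 4 D^2 z^4, i.e. the smooth
   projective model  d w^2 = d^2 t^4 + 2(p+q) D d z^2 t^2 + 4 D^2 z^4. *)
Definition Cd_form (p q D d z w t : Z) : Z :=
  d * w ^ 2 - (d ^ 2 * t ^ 4 + 2 * (p + q) * D * d * z ^ 2 * t ^ 2
               + 4 * D ^ 2 * z ^ 4).

(* An l-adic integer is represented by a compatible sequence (x_k)_k of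
   integers, x_k being its residue mod l^k: l^k | x_{k+1} - x_k. *)
Definition compatible (l : Z) (x : nat -> Z) : Prop :=
  forall k : nat, (l ^ Z.of_nat k | x (S k) - x k).

(* C_d(Q_l) <> empty: a point of the projective model with coordinates in
   Q_l; after weighted rescaling, a Z_l-point (z : w : t) with z, t not
   both divisible by l (Z_l = inverse limit of Z / l^k). *)
Definition Cd_Ql_nonempty (p q D d l : Z) : Prop :=
  exists z w t : nat -> Z,
    compatible l z /\ compatible l w /\ compatible l t /\
    (~ (l | z 1%nat) \/ ~ (l | t 1%nat)) /\
    forall k : nat, (l ^ Z.of_nat k | Cd_form p q D d (z k) (w k) (t k)).

Definition Cd_R_nonempty (p q D d : Z) : Prop :=
  exists z w t : R, (z <> 0 \/ t <> 0)%R /\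
    (IZR d * w ^ 2 = IZR d ^ 2 * t ^ 4 + 2 * IZR (p + q) * IZR D * IZR d * z ^ 2 * t ^ 2
                     + 4 * IZR D ^ 2 * z ^ 4)%R.

Definition finite_place (p q : Z) (Ds : list Z) (l : Z) : Prop :=
  l = 2 \/ l = p \/ l = q \/ In l Ds.

(* Q(S,2) with squarefree integer representatives *)
Definition in_QS2 (p q : Z) (Ds : list Z) (d : Z) : Prop :=
  d <> 0 /\ (forall r, prime r -> ~ (r * r | d)) /\
  (forall r, prime r -> (r | d) -> finite_place p q Ds r).

Definition in_Sphi (p q : Z) (Ds : list Z) (d : Z) : Prop :=
  in_QS2 p q Ds d /\ Cd_R_nonempty p q (prodZ Ds) d /\
  (forall l, finite_place p q Ds l -> Cd_Ql_nonempty p q (prodZ Ds) d l).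

(* Main.v *)
Require Import Defs.
From Stdlib Require Import ZArith Znumtheory List.
Open Scope Z_scope.

Module MC.
From mathcomp Require Import ssreflect ssrfun ssrbool eqtype ssrnat seq div prime fintype bigop ssralg poly zmodp finalg finfield.
Local Set Implicit Arguments. Local Unset Strict Implicit. Local Unset Printing Implicit Defensive.
Import GRing.Theory.
Local Open Scope ring_scope.

Section Fp.
Variable n : nat.
Hypothesis pn : prime n.
Local Notation F := 'F_n.

Lemma Fnat_eq (a b : nat) : ((a%:R : F) == b%:R) = (a %% n == b %% n)%N.
Proof. by apply/eqP/eqP => [H|H]; [rewrite -!(val_Fp_nat pn) H | apply: val_inj; rewrite /= !(val_Fp_nat pn)]. Qed.

Lemma Fnat0 (a : nat) : ((a%:R : F) == 0) = (n %| a)%N.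
Proof. have -> : (0 : F) = 0%:R by []. by rewrite Fnat_eq mod0n. Qed.

Lemma F_fermat (x : F) : x != 0 -> x ^+ n.-1 = 1.
Proof.
  move=> x0. have H := expf_card x. rewrite card_Fp // in H.
  have H2 : x ^+ n.-1 * x = x by rewrite -exprSr prednK // prime_gt0.
  apply: (mulIf x0). by rewrite H2 mul1r.
Qed.

Lemma mc_fermat (a : nat) : ~~ (n %| a)%N -> (a ^ n.-1 %% n = 1)%N.
Proof.
  move=> na. have H : ((a ^ n.-1)%:R : F) = 1%:R by rewrite natrX; apply: F_fermat; rewrite Fnat0.
  move/eqP: H; rewrite Fnat_eq => /eqP ->.
  by rewrite modn_small // prime_gt1.
Qed.


Lemma mc_euler (a : nat) : odd n -> (a ^ n.-1./2 %% n = 1)%N -> exists x : nat, (x * x %% n = a %% n)%N.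
Proof.
  move=> on ha. set m := n.-1./2.
  have n1 : (1 < n)%N by apply: prime_gt1.
  have hm : m.*2 = n.-1.
  { rewrite /m halfK. have -> : odd n.-1 = false.
    { move: on n1. case: n => [|k] //= ok _. by apply/negbTE; rewrite ok. }
    by rewrite subn0. }
  have n3 : (2 < n)%N.
  { move: on n1. case: n => [|[|[|k]]] //. }
  have m0 : (0 < m)%N.
  { rewrite -double_gt0 hm. by case: n n3 => [|[|k]]. }
  have hmm2 : (m + m < n)%N by rewrite addnn hm; case: n n1.
  have mlt : (1 + m <= n)%N by rewrite add1n; apply: leq_ltn_trans (leq_addr m m) hmm2.
  have [/existsP [x /eqP Hx] | H] := boolP [exists x : F, x ^+ 2 == a%:R].
  - exists (nat_of_ord x). apply/eqP. rewrite -Fnat_eq natrM.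
    have -> : ((nat_of_ord x)%:R : F) = x by apply: natr_Zp.
    by rewrite -expr2 Hx.
  - exfalso.
    set rs := [seq (i%:R : F) ^+ 2 | i <- iota 1 m].
    set P : {poly F} := 'X^m - 1%:P.
    have P0 : P != 0 by rewrite -size_poly_gt0 size_XnsubC.
    have rootP y : root P y = (y ^+ m == 1).
    { by rewrite /P rootE !hornerE subr_eq0. }
    have nd i : (0 < i < n)%N -> (i%:R : F) != 0.
    { move=> /andP [i0 iN]. rewrite Fnat0. apply/negP => /(dvdn_leq i0). by rewrite leqNgt iN. }
    have Hall : all (root P) ((a%:R : F) :: rs).
    { rewrite /= rootP -natrX. apply/andP; split.
      - have -> : (1 : F) = 1%:R by []. by rewrite Fnat_eq ha modn_small.
      - apply/allP => y /mapP [i]. rewrite mem_iota => /andP [i1 i2] ->.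
        rewrite rootP -exprM mul2n hm F_fermat //. apply: nd. rewrite i1 /=.
        apply: leq_trans i2 mlt. }
    have Hu : uniq ((a%:R : F) :: rs).
    { rewrite /= map_inj_in_uniq ?iota_uniq ?andbT.
      - apply/mapP => [[i _ Hi]]. move/negP: H; apply. apply/existsP. exists (i%:R). by rewrite -Hi.
      - move=> i j. rewrite !mem_iota => /andP [i1 i2] /andP [j1 j2] /eqP.
        rewrite -subr_eq0 subr_sqr mulf_eq0 => /orP [].
        + rewrite subr_eq0 Fnat_eq !modn_small; first by move/eqP.
          * apply: leq_trans j2 mlt.
          * apply: leq_trans i2 mlt.
        + rewrite -natrD Fnat0 => Hd.
          have Hij : (0 < i + j)%N by rewrite addn_gt0 i1.
          move: (dvdn_leq Hij Hd). rewrite leqNgt. move/negP => Hn; exfalso; apply: Hn.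
          apply: leq_ltn_trans hmm2. apply: leq_add; by rewrite -ltnS -(add1n m). }
    have := max_poly_roots P0 Hall Hu. rewrite size_XnsubC // /= size_map size_iota. by rewrite ltnn.
Qed.

End Fp.

Lemma prime_of (n : nat) : Peano.lt 1 n -> (forall d, (exists k, n = Nat.mul k d) -> d = 1%N \/ d = n) -> prime n.
Proof.
  move=> n1 Hd. apply/primeP; split; first by apply/ltP.
  move=> d /dvdnP [k Hk]. have [->|->] : d = 1%N \/ d = n by apply: Hd; exists k.
  - by rewrite /= ?eqxx.
  - by rewrite /= ?eqxx ?orbT.
Qed.

Lemma expnP a k : expn a k = Nat.pow a k.
Proof. elim: k => [|k IH] //. by rewrite expnS IH. Qed.

Lemma fermatN n a : Peano.lt 1 n -> (forall d, (exists k, n = Nat.mul k d) -> d = 1%N \/ d = n) ->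
  ~ (exists k, a = Nat.mul k n) -> exists q, Nat.pow a (Nat.pred n) = Nat.add (Nat.mul q n) 1.
Proof.
  move=> n1 Hd Ha. have pn := prime_of n1 Hd.
  have na : ~~ (n %| a)%N. { apply/negP => /dvdnP [k Hk]. apply: Ha. by exists k. }
  have H := mc_fermat pn na. exists (a ^ n.-1 %/ n)%N.
  rewrite -expnP {1}(divn_eq (a ^ n.-1) n) H. by [].
Qed.

Lemma eulerN n m a : Peano.lt 1 n -> (forall d, (exists k, n = Nat.mul k d) -> d = 1%N \/ d = n) ->
  n = Nat.add (Nat.mul 2 m) 1 ->
  (exists q, Nat.pow a m = Nat.add (Nat.mul q n) 1) ->
  exists x q1 q2, Nat.add (Nat.mul x x) (Nat.mul q1 n) = Nat.add a (Nat.mul q2 n).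
Proof.
  move=> n1 Hd Hn [q Hq]. have pn := prime_of n1 Hd.
  have on : odd n. { rewrite Hn -addnE -mulnE. by rewrite addn1 mul2n /= odd_double. }
  have hm : n.-1./2 = m. { rewrite Hn -addnE -mulnE addn1 /= mul2n doubleK //. }
  have ha : (a ^ n.-1./2 %% n = 1)%N.
  { rewrite hm expnP Hq -addnE -mulnE modnMDl modn_small //. by apply/ltP. }
  have [x Hx] := mc_euler pn on ha.
  exists x, (a %/ n)%N, (x * x %/ n)%N.
  rewrite -!addnE -!mulnE. rewrite {1}(divn_eq (x * x) n) {2}(divn_eq a n) Hx.
  by rewrite addnAC [RHS]addnC addnA.
Qed.
End MC.


From Stdlib Require Import ZArith Znumtheory List Lia ClassicalEpsilon.
Open Scope Z_scope.

Lemma prime_ge2 l : prime l -> 2 <= l.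
Proof. intros H; destruct H; lia. Qed.

Lemma inv_mod l a : prime l -> ~ (l | a) -> exists b, (l | a * b - 1).
Proof.
  intros Hl Ha.
  assert (Hr : rel_prime l a) by (apply prime_rel_prime; auto).
  destruct (Zis_gcd_bezout _ _ _ Hr) as [u v Huv].
  exists v. exists (-u). lia.
Qed.

Lemma prime_div_mul l a b : prime l -> (l | a * b) -> (l | a) \/ (l | b).
Proof. intros; apply prime_mult; auto. Qed.

Lemma prime_div_pow l a n : prime l -> (l | a ^ Z.of_nat n) -> n <> 0%nat -> (l | a).
Proof.
  intros Hl; induction n as [|n IH]; intros H Hn; [lia|].
  rewrite Nat2Z.inj_succ, Z.pow_succ_r in H by lia.
  destruct (prime_div_mul _ _ _ Hl H) as [H1|H1]; auto.
  destruct n; [simpl in H1; destruct Hl; apply Z.divide_1_r in H1; lia|].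
  apply IH; auto.
Qed.

Lemma div_pow_le l a b : 0 <= a <= b -> (l ^ a | l ^ b).
Proof. intros. replace b with (a + (b - a)) by lia. rewrite Z.pow_add_r by lia.
  exists (l ^ (b-a)); ring. Qed.

Lemma build_seq (P : nat -> Z -> Prop) (R : nat -> Z -> Z -> Prop) v0 :
  P 0%nat v0 ->
  (forall n v, P n v -> exists v', R n v v' /\ P (S n) v') ->
  exists g : nat -> Z, g 0%nat = v0 /\ forall n, P n (g n) /\ R n (g n) (g (S n)).
Proof.
  intros H0 Hs.
  set (step := fun n v => epsilon (inhabits 0) (fun v' => P n v -> R n v v' /\ P (S n) v')).
  assert (Hst : forall n v, P n v -> R n v (step n v) /\ P (S n) (step n v)).
  { intros n v Hv. unfold step.
    refine (epsilon_spec (inhabits 0) (fun v' => P n v -> R n v v' /\ P (S n) v') _ Hv).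
    destruct (Hs n v Hv) as [v' Hv']. exists v'. auto. }
  set (g := fix g n := match n with O => v0 | S m => step m (g m) end).
  exists g. split; [reflexivity|].
  assert (HP : forall n, P n (g n)).
  { induction n; simpl; auto. apply Hst; auto. }
  intros n; split; [auto|]. simpl. apply Hst; auto.
Qed.

Lemma lift_odd l d0 F0 s : prime l -> l <> 2 -> ~ (l | d0) -> ~ (l | s) -> (l | d0 * s ^ 2 - F0) ->
  exists w : nat -> Z, compatible l w /\ forall k : nat, (l ^ Z.of_nat k | d0 * (w k) ^ 2 - F0).
Proof.
  intros Hl Hl2 Hd Hs H1.
  pose proof (prime_ge2 _ Hl) as Hge.
  destruct (build_seq (fun n v => (l ^ Z.of_nat (S n) | d0 * v ^ 2 - F0) /\ ~ (l | v))
     (fun n v v' => (l ^ Z.of_nat (S n) | v' - v)) s) as [g [_ Hg]].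
  { split; auto. change (Z.of_nat 1) with 1. rewrite Z.pow_1_r. auto. }
  { intros n v [[c Hc] Hv].
    assert (Hg : ~ (l | 2 * d0 * v)).
    { intros HH. destruct (prime_div_mul _ _ _ Hl HH) as [HH2|HH2].
      - destruct (prime_div_mul _ _ _ Hl HH2) as [HH3|HH3]; auto.
        apply Z.divide_pos_le in HH3; [|lia]. assert (l = 2 \/ l = 1 \/ l = 0) by lia. lia.
      - auto. }
    destruct (inv_mod _ _ Hl Hg) as [h [e He]].
    set (L := l ^ Z.of_nat (S n)).
    exists (v + L * (- c * h)). split.
    - exists (- c * h). ring.
    - split.
      + rewrite Nat2Z.inj_succ, Z.pow_succ_r by lia. fold L.
        exists (- c * e + L / l * d0 * c * c * h * h).
        assert (HL : L = l * (L / l)).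
        { unfold L. rewrite Nat2Z.inj_succ, Z.pow_succ_r by lia. rewrite Z.mul_comm, Z.div_mul by lia. ring. }
        replace (d0 * (v + L * (- c * h)) ^ 2 - F0) with
          ((d0 * v ^ 2 - F0) - L * c * (2 * d0 * v * h) + L * L * d0 * c * c * h * h) by ring.
        rewrite Hc. fold L. replace (2 * d0 * v * h) with (e * l + 1) by lia.
        rewrite HL at 3. ring.
      + intros Hdv. apply Hv. 
        replace v with ((v + L * (- c * h)) - L * (-c * h)) by ring.
        apply Z.divide_sub_r; auto. apply Z.divide_mul_l.
        unfold L. rewrite Nat2Z.inj_succ, Z.pow_succ_r by lia. apply Z.divide_factor_l. }
  exists g. split.
  - intros k. destruct (Hg k) as [_ Hr]. eapply Z.divide_trans; [|exact Hr].
    apply div_pow_le. lia.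
  - intros k. destruct (Hg k) as [[Hk _] _]. eapply Z.divide_trans; [|exact Hk]. apply div_pow_le. lia.
Qed.

Lemma not2_odd x : ~ (2 | x) -> exists k, x = 2 * k + 1.
Proof.
  intros H. exists (x / 2). pose proof (Z.div_mod x 2 ltac:(lia)).
  pose proof (Z.mod_pos_bound x 2 ltac:(lia)).
  assert (x mod 2 <> 0). { intros E. apply H. exists (x/2). lia. }
  lia.
Qed.

Lemma odd_not2 x k : x = 2 * k + 1 -> ~ (2 | x).
Proof. intros -> [c Hc]. lia. Qed.

Lemma lift_two d0 F0 : ~ (2 | d0) -> (8 | d0 - F0) ->
  exists w : nat -> Z, compatible 2 w /\ forall k : nat, (2 ^ Z.of_nat k | d0 * (w k) ^ 2 - F0).
Proof.
  intros Hd H1.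
  destruct (build_seq (fun n v => (2 ^ (Z.of_nat n + 3) | d0 * v ^ 2 - F0) /\ ~ (2 | v))
     (fun n v v' => (2 ^ (Z.of_nat n + 2) | v' - v)) 1) as [g [_ Hg]].
  { split.
    - change (Z.of_nat 0 + 3) with 3. replace (d0 * 1 ^ 2 - F0) with (d0 - F0) by ring. exact H1.
    - intros [c Hc]; lia. }
  { intros n v [[c Hc] Hv].
    set (L := 2 ^ (Z.of_nat n + 2)).
    assert (HL3 : 2 ^ (Z.of_nat n + 3) = 2 * L) by (unfold L; rewrite <- Z.pow_succ_r by lia; f_equal; lia).
    exists (v + L * c). split.
    - exists c. ring.
    - destruct (not2_odd _ Hd) as [a Ha]. destruct (not2_odd _ Hv) as [b Hb].
      split.
      + replace (Z.of_nat (S n) + 3) with ((Z.of_nat n + 2) + 2) by lia.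
        rewrite Z.pow_add_r by lia. fold L.
        exists (c * (a + b + 2 * a * b + 1) + 2 ^ Z.of_nat n * d0 * c * c).
        replace (d0 * (v + L * c) ^ 2 - F0) with ((d0 * v ^ 2 - F0) + 2 * d0 * v * L * c + d0 * L * L * c * c) by ring.
        rewrite Hc, HL3. 
        assert (HL : L = 2 ^ Z.of_nat n * 2 ^ 2) by (unfold L; rewrite Z.pow_add_r; lia).
        rewrite Ha, Hb. rewrite HL at 3. ring.
      + intros Hdv. apply Hv.
        replace v with ((v + L * c) - L * c) by ring.
        apply Z.divide_sub_r; auto. apply Z.divide_mul_l.
        unfold L. rewrite Z.pow_add_r by lia. apply Z.divide_mul_r. exists 2; reflexivity. }
  exists g. split.
  - intros k. destruct (Hg k) as [_ Hr]. eapply Z.divide_trans; [|exact Hr].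
    apply div_pow_le. lia.
  - intros k. destruct (Hg k) as [[Hk _] _]. eapply Z.divide_trans; [|exact Hk]. apply div_pow_le. lia.
Qed.

Lemma mk_nonempty p q D d l z t m A d0 F0 :
  (forall w0, Cd_form p q D d z (m * w0) t = A * (d0 * w0 ^ 2 - F0)) ->
  (~ (l | z) \/ ~ (l | t)) ->
  (exists w : nat -> Z, compatible l w /\ forall k : nat, (l ^ Z.of_nat k | d0 * (w k) ^ 2 - F0)) ->
  Cd_Ql_nonempty p q D d l.
Proof.
  intros Hf Hp [w [Hc Hw]].
  exists (fun _ => z), (fun k => m * w k), (fun _ => t).
  repeat split.
  - intros k. replace (z - z) with 0 by ring. apply Z.divide_0_r.
  - intros k. replace (m * w (S k) - m * w k) with (m * (w (S k) - w k)) by ring.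
    apply Z.divide_mul_r. apply Hc.
  - intros k. replace (t - t) with 0 by ring. apply Z.divide_0_r.
  - auto.
  - intros k. rewrite Hf. apply Z.divide_mul_r. apply Hw.
Qed.

Lemma compat_1 l x : prime l -> compatible l x -> forall k, (l | x (S k) - x 1%nat).
Proof.
  intros Hl Hc k. induction k.
  - replace (x 1%nat - x 1%nat) with 0 by ring. apply Z.divide_0_r.
  - replace (x (S (S k)) - x 1%nat) with ((x (S (S k)) - x (S k)) + (x (S k) - x 1%nat)) by ring.
    apply Z.divide_add_r; auto. eapply Z.divide_trans; [|apply Hc].
    rewrite Nat2Z.inj_succ, Z.pow_succ_r by lia. apply Z.divide_factor_l.
Qed.

Lemma reduce_level p q D d l : prime l -> Cd_Ql_nonempty p q D d l ->
  forall k : nat, exists z w t, (~ (l | z) \/ ~ (l | t)) /\ (l ^ Z.of_nat k | Cd_form p q D d z w t).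
Proof.
  intros Hl [z [w [t [Hz [Hw [Ht [Hp Hf]]]]]]] k.
  exists (z (S k)), (w (S k)), (t (S k)). split.
  - destruct Hp as [Hp|Hp]; [left|right]; intros HH; apply Hp.
    + replace (z 1%nat) with (z (S k) - (z (S k) - z 1%nat)) by ring.
      apply Z.divide_sub_r; auto. apply compat_1; auto.
    + replace (t 1%nat) with (t (S k) - (t (S k) - t 1%nat)) by ring.
      apply Z.divide_sub_r; auto. apply compat_1; auto.
  - eapply Z.divide_trans; [|apply Hf]. apply div_pow_le. lia.
Qed.


From Stdlib Require Import ZArith Znumtheory List Lia.
Open Scope Z_scope.

Section Odd.
Variable l : Z.
Hypothesis Hl : prime l.
Hypothesis Hl2 : l <> 2.

Lemma nd_mul a b : ~ (l | a) -> ~ (l | b) -> ~ (l | a * b).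
Proof. intros Ha Hb H. destruct (prime_mult _ Hl _ _ H); auto. Qed.

Lemma d_mul_nd a b : (l | a * b) -> ~ (l | a) -> (l | b).
Proof. intros H Ha. destruct (prime_mult _ Hl _ _ H); tauto. Qed.

Lemma nd_pow2 a : ~ (l | a) -> ~ (l | a ^ 2).
Proof. intros. rewrite Z.pow_2_r. apply nd_mul; auto. Qed.

Lemma nd_pow4 a : ~ (l | a) -> ~ (l | a ^ 4).
Proof. intros. replace (a ^ 4) with ((a * a) * (a * a)) by ring. repeat apply nd_mul; auto. Qed.

Lemma d_pow2 a : (l | a ^ 2) -> (l | a).
Proof. intros H. rewrite Z.pow_2_r in H. destruct (prime_mult _ Hl _ _ H); auto. Qed.

Lemma nd_2 : ~ (l | 2).
Proof. intros H. pose proof (prime_ge2 _ Hl). apply Z.divide_pos_le in H; lia. Qed.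

Lemma nd_4 : ~ (l | 4).
Proof. replace 4 with (2 * 2) by ring. apply nd_mul; apply nd_2. Qed.

Lemma nd_1 : ~ (l | 1).
Proof. intros H. pose proof (prime_ge2 _ Hl). apply Z.divide_pos_le in H; lia. Qed.

Lemma nd_eps e : e = 1 \/ e = -1 -> ~ (l | e).
Proof. intros [-> | ->]; [apply nd_1|]. intros H. apply nd_1. apply Z.divide_opp_r in H. exact H. Qed.

Lemma sq_ratio a u b : (l | a * u ^ 2 - b ^ 2) -> ~ (l | u) -> exists x, (l | x ^ 2 - a).
Proof.
  intros H Hu. destruct (inv_mod _ _ Hl Hu) as [v [k Hk]].
  exists (b * v).
  replace ((b * v) ^ 2 - a) with (- (a * u ^ 2 - b ^ 2) * v ^ 2 + a * (u * v + 1) * (u * v - 1)) by ring.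
  apply Z.divide_add_r.
  - apply Z.divide_mul_l. apply Z.divide_opp_r. auto.
  - apply Z.divide_mul_r. rewrite Hk. apply Z.divide_factor_r.
Qed.

Lemma leg_nd a x : (l | x ^ 2 - a) -> ~ (l | a) -> ~ (l | x).
Proof. intros H Ha Hx. apply Ha. replace a with (x ^ 2 - (x ^ 2 - a)) by ring.
  apply Z.divide_sub_r; auto. rewrite Z.pow_2_r. apply Z.divide_mul_l; auto. Qed.

Lemma pow_S_div k : (l | l ^ Z.of_nat (S k)).
Proof. rewrite Nat2Z.inj_succ, Z.pow_succ_r by lia. apply Z.divide_factor_l. Qed.

(* l = p or l = q *)
Lemma odd_pq p q D d M' : q = p + 2 -> ~ (l | D) -> ~ (l | d) -> p * q = l * M' -> ~ (l | M') ->
  (Cd_Ql_nonempty p q D d l <-> legendre_one d l).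
Proof.
  intros Hq HD Hd HM HM'. split.
  - intros Hne. split; auto.
    destruct (reduce_level _ _ _ _ _ Hl Hne 2%nat) as [z [w [t [Hp Hf]]]].
    change (Z.of_nat 2) with 2 in Hf.
    set (X := d * t ^ 2 + (p + q) * D * z ^ 2).
    assert (Hid : Cd_form p q D d z w t = d * w ^ 2 - X ^ 2 + l * (4 * M' * D ^ 2 * z ^ 4)).
    { unfold Cd_form, X. replace (l * (4 * M' * D ^ 2 * z ^ 4)) with (4 * (l * M') * D ^ 2 * z ^ 4) by ring.
      rewrite <- HM, Hq. ring. }
    assert (Hl1 : (l | Cd_form p q D d z w t)).
    { eapply Z.divide_trans; [|exact Hf]. exists l. ring. }
    destruct (Znumtheory.Zdivide_dec l X) as [HX|HX].
    + exfalso.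
      assert (Hw : (l | w)).
      { apply d_pow2. apply (d_mul_nd d); auto.
        replace (d * w ^ 2) with (Cd_form p q D d z w t + X ^ 2 - l * (4 * M' * D ^ 2 * z ^ 4)) by (rewrite Hid; ring).
        apply Z.divide_sub_r; [apply Z.divide_add_r; auto|apply Z.divide_factor_l].
        rewrite Z.pow_2_r. apply Z.divide_mul_l; auto. }
      destruct Hw as [w1 Hw1]. destruct HX as [x1 Hx1].
      assert (Hz : (l | z)).
      { assert (H2 : (l * l | l * (4 * M' * D ^ 2 * z ^ 4))).
        { replace (l * (4 * M' * D ^ 2 * z ^ 4)) with (Cd_form p q D d z w t - d * w ^ 2 + X ^ 2) by (rewrite Hid; ring).
          assert (A1 : (l * l | d * w ^ 2)) by (rewrite Hw1; exists (d * w1 ^ 2); ring).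
          assert (A2 : (l * l | X ^ 2)) by (rewrite Hx1; exists (x1 ^ 2); ring).
          assert (A3 : (l * l | Cd_form p q D d z w t)) by (replace (l * l) with (l ^ 2) by ring; auto).
          apply Z.divide_add_r; [apply Z.divide_sub_r|]; auto. }
        apply Z.mul_divide_cancel_l in H2; [|pose proof (prime_ge2 _ Hl); lia].
        assert (H3 : (l | z ^ 4)).
        { apply (d_mul_nd (4 * M' * D ^ 2)); [exact H2|].
          apply nd_mul; [apply nd_mul|apply nd_pow2]; auto. apply nd_4. }
        destruct (Zdivide_dec l z) as [|Hz]; auto. exfalso. apply (nd_pow4 z); auto. }
      assert (Ht : (l | t)).
      { apply d_pow2. apply (d_mul_nd d); auto.
        replace (d * t ^ 2) with (X - (p + q) * D * z ^ 2) by (unfold X; ring).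
        apply Z.divide_sub_r. exists x1; auto. apply Z.divide_mul_r. rewrite Z.pow_2_r. apply Z.divide_mul_l; auto. }
      destruct Hp; auto.
    + apply (sq_ratio d w X).
      * replace (d * w ^ 2 - X ^ 2) with (Cd_form p q D d z w t - l * (4 * M' * D ^ 2 * z ^ 4)) by (rewrite Hid; ring).
        apply Z.divide_sub_r; auto. apply Z.divide_factor_l.
      * intros Hw. apply HX. apply d_pow2.
        replace (X ^ 2) with (d * w ^ 2 - Cd_form p q D d z w t + l * (4 * M' * D ^ 2 * z ^ 4)) by (rewrite Hid; ring).
        apply Z.divide_add_r; [apply Z.divide_sub_r|apply Z.divide_factor_l]; auto.
        apply Z.divide_mul_r. rewrite Z.pow_2_r. apply Z.divide_mul_l; auto.
  - intros [_ [x Hx]].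
    apply (mk_nonempty p q D d l 0 1 1 d 1 d).
    + intros w0. unfold Cd_form. ring.
    + right. apply nd_1.
    + apply (lift_odd l 1 d x); auto using nd_1. eapply leg_nd; eauto.
      replace (1 * x ^ 2 - d) with (x ^ 2 - d) by ring. auto.
Qed.

Lemma dv_pow2 a : (l | a) -> (l | a ^ 2).
Proof. intros H. rewrite Z.pow_2_r. apply Z.divide_mul_l; auto. Qed.

Lemma odd_D p q D d D' : D = l * D' -> ~ (l | D') -> ~ (l | d) ->
  (Cd_Ql_nonempty p q D d l <-> legendre_one d l).
Proof.
  intros HD HD' Hd. split.
  - intros Hne. split; auto.
    destruct (reduce_level _ _ _ _ _ Hl Hne 3%nat) as [z [w [t [Hp Hf]]]].
    change (Z.of_nat 3) with 3 in Hf.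
    assert (Hl1 : (l | Cd_form p q D d z w t)).
    { eapply Z.divide_trans; [|exact Hf]. exists (l ^ 2). ring. }
    destruct (Zdivide_dec l t) as [[t1 Ht1]|Ht].
    + assert (Hz : ~ (l | z)).
      { destruct Hp as [Hp|Hp]; auto. exfalso; apply Hp. exists t1; auto. }
      assert (Hid : Cd_form p q D d z w t = d * w ^ 2 - l ^ 2 * (4 * D' ^ 2 * z ^ 4) - l ^ 3 * (d ^ 2 * l * t1 ^ 4 + 2 * (p + q) * D' * d * z ^ 2 * t1 ^ 2)).
      { unfold Cd_form. rewrite HD, Ht1. ring. }
      assert (Hw : (l | w)).
      { apply d_pow2. apply (d_mul_nd d); auto.
        replace (d * w ^ 2) with (Cd_form p q D d z w t + l ^ 2 * (4 * D' ^ 2 * z ^ 4) + l ^ 3 * (d ^ 2 * l * t1 ^ 4 + 2 * (p + q) * D' * d * z ^ 2 * t1 ^ 2)) by (rewrite Hid; ring).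
        apply Z.divide_add_r; [apply Z.divide_add_r|].
        - exact Hl1.
        - apply Z.divide_mul_l. exists l; ring.
        - apply Z.divide_mul_l. exists (l ^ 2); ring. }
      destruct Hw as [w1 Hw1].
      assert (Hid2 : Cd_form p q D d z w t = l ^ 2 * (d * w1 ^ 2 - 4 * D' ^ 2 * z ^ 4) - l ^ 3 * (d ^ 2 * l * t1 ^ 4 + 2 * (p + q) * D' * d * z ^ 2 * t1 ^ 2)).
      { rewrite Hid, Hw1. ring. }
      assert (Hk : (l | d * w1 ^ 2 - 4 * D' ^ 2 * z ^ 4)).
      { assert (H3 : (l ^ 2 * l | l ^ 2 * (d * w1 ^ 2 - 4 * D' ^ 2 * z ^ 4))).
        { replace (l ^ 2 * (d * w1 ^ 2 - 4 * D' ^ 2 * z ^ 4)) with (Cd_form p q D d z w t + l ^ 3 * (d ^ 2 * l * t1 ^ 4 + 2 * (p + q) * D' * d * z ^ 2 * t1 ^ 2)) by (rewrite Hid2; ring).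
          replace (l ^ 2 * l) with (l ^ 3) by ring. apply Z.divide_add_r; auto. apply Z.divide_factor_l. }
        apply Z.mul_divide_cancel_l in H3; auto. pose proof (prime_ge2 _ Hl). apply Z.pow_nonzero; lia. }
      apply (sq_ratio d w1 (2 * D' * z ^ 2)).
      * replace (d * w1 ^ 2 - (2 * D' * z ^ 2) ^ 2) with (d * w1 ^ 2 - 4 * D' ^ 2 * z ^ 4) by ring. auto.
      * intros Hw. apply (nd_mul 4 (D' ^ 2 * z ^ 4)); [apply nd_4| apply nd_mul; apply nd_pow2 + apply nd_pow4; auto|].
        replace (4 * (D' ^ 2 * z ^ 4)) with (d * w1 ^ 2 - (d * w1 ^ 2 - 4 * D' ^ 2 * z ^ 4)) by ring.
        apply Z.divide_sub_r; auto. apply Z.divide_mul_r. apply dv_pow2; auto.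
    + assert (Hmod : (l | d * w ^ 2 - (d * t ^ 2) ^ 2)).
      { replace (d * w ^ 2 - (d * t ^ 2) ^ 2) with (Cd_form p q D d z w t + l * (2 * (p + q) * D' * d * z ^ 2 * t ^ 2 + 4 * l * D' ^ 2 * z ^ 4)) by (unfold Cd_form; rewrite HD; ring).
        apply Z.divide_add_r; auto. apply Z.divide_factor_l. }
      apply (sq_ratio d w (d * t ^ 2)); auto.
      intros Hw. apply (nd_mul d (d * t ^ 4)); [auto|apply nd_mul; [auto|apply nd_pow4; auto]|].
      replace (d * (d * t ^ 4)) with (d * w ^ 2 - (d * w ^ 2 - (d * t ^ 2) ^ 2)) by ring.
      apply Z.divide_sub_r; auto. apply Z.divide_mul_r. apply dv_pow2; auto.
  - intros [_ [x Hx]].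
    apply (mk_nonempty p q D d l 0 1 1 d 1 d).
    + intros w0. unfold Cd_form. ring.
    + right. apply nd_1.
    + apply (lift_odd l 1 d x); auto using nd_1. eapply leg_nd; eauto.
      replace (1 * x ^ 2 - d) with (x ^ 2 - d) by ring. auto.
Qed.

Lemma odd_Di p q D d Dh e : q = p + 2 -> (e = 1 \/ e = -1) -> D = l * Dh -> ~ (l | Dh) ->
  d = e * l -> ~ (l | p) -> ~ (l | q) ->
  (Cd_Ql_nonempty p q D d l <-> legendre_one (- e * p * Dh) l /\ legendre_one (- e * q * Dh) l).
Proof.
  intros Hq He HD HDh Hdd Hp Hqq.
  assert (Hl0 : l <> 0) by (pose proof (prime_ge2 _ Hl); lia).
  assert (Hne' : ~ (l | - e)) by (apply nd_eps; lia).
  assert (Hne : ~ (l | e)) by (apply nd_eps; lia).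
  assert (Hap : ~ (l | - e * p * Dh)) by (apply nd_mul; [apply nd_mul|]; auto).
  assert (Haq : ~ (l | - e * q * Dh)) by (apply nd_mul; [apply nd_mul|]; auto).
  set (Qf := fun z t => t ^ 4 + 2 * e * (p + q) * Dh * z ^ 2 * t ^ 2 + 4 * Dh ^ 2 * z ^ 4).
  assert (Hid : forall z w t, Cd_form p q D d z w t = e * l * w ^ 2 - l ^ 2 * Qf z t).
  { intros z w t. unfold Cd_form, Qf. rewrite HD, Hdd. destruct He as [-> | ->]; ring. }
  split.
  - intros Hne0.
    destruct (reduce_level _ _ _ _ _ Hl Hne0 3%nat) as [z [w [t [Hpr Hf]]]].
    change (Z.of_nat 3) with 3 in Hf. rewrite Hid in Hf.
    assert (Hw : (l | w)).
    { apply d_pow2. apply (d_mul_nd e); auto.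
      assert (H2 : (l * l | l * (e * w ^ 2))).
      { replace (l * (e * w ^ 2)) with ((e * l * w ^ 2 - l ^ 2 * Qf z t) + l ^ 2 * Qf z t) by ring.
        apply Z.divide_add_r.
        - eapply Z.divide_trans; [|exact Hf]. exists l; ring.
        - exists (Qf z t); ring. }
      apply Z.mul_divide_cancel_l in H2; auto. }
    destruct Hw as [w1 Hw1]. subst w.
    assert (HQ : (l | Qf z t)).
    { assert (H3 : (l ^ 2 * l | l ^ 2 * (e * w1 ^ 2 * l - Qf z t))).
      { replace (l ^ 2 * (e * w1 ^ 2 * l - Qf z t)) with (e * l * (w1 * l) ^ 2 - l ^ 2 * Qf z t) by ring.
        replace (l ^ 2 * l) with (l ^ 3) by ring. auto. }
      apply Z.mul_divide_cancel_l in H3; [|apply Z.pow_nonzero; lia].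
      replace (Qf z t) with (e * w1 ^ 2 * l - (e * w1 ^ 2 * l - Qf z t)) by ring.
      apply Z.divide_sub_r; auto. apply Z.divide_factor_r. }
    assert (Hz : ~ (l | z)).
    { intros Hz. destruct Hpr as [Hpr|Hpr]; [contradiction|].
      destruct Hz as [z1 ->]. apply (nd_pow4 t) in Hpr. apply Hpr.
      replace (t ^ 4) with (Qf (z1 * l) t - l * (2 * e * (p + q) * Dh * z1 ^ 2 * l * t ^ 2 + 4 * Dh ^ 2 * z1 ^ 4 * l ^ 3)) by (unfold Qf; ring).
      apply Z.divide_sub_r; auto. apply Z.divide_factor_l. }
    assert (Ht : ~ (l | t)).
    { intros [t1 ->]. apply (nd_mul 4 (Dh ^ 2 * z ^ 4)); [apply nd_4|apply nd_mul; [apply nd_pow2|apply nd_pow4]; auto|].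
      replace (4 * (Dh ^ 2 * z ^ 4)) with (Qf z (t1 * l) - l * (t1 ^ 4 * l ^ 3 + 2 * e * (p + q) * Dh * z ^ 2 * t1 ^ 2 * l)) by (unfold Qf; ring).
      apply Z.divide_sub_r; auto. apply Z.divide_factor_l. }
    assert (Hzt : ~ (l | 4 * z ^ 2 * t ^ 2)) by (apply nd_mul; [apply nd_mul; [apply nd_4|apply nd_pow2]|apply nd_pow2]; auto).
    set (S := t ^ 2 + e * (p + q) * Dh * z ^ 2).
    split.
    + split; auto.
      set (u := e * S - 2 * p * Dh * z ^ 2).
      apply (sq_ratio _ u (2 * p * Dh * z * t)).
      * replace (- e * p * Dh * u ^ 2 - (2 * p * Dh * z * t) ^ 2) with (- e * p * Dh * Qf z t)
          by (unfold u, S, Qf; rewrite Hq; destruct He as [-> | ->]; ring).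
        apply Z.divide_mul_r; auto.
      * intros Hu. apply (nd_mul (e * p * Dh) (4 * z ^ 2 * t ^ 2)); [apply nd_mul; [apply nd_mul|]; auto|auto|].
        replace (e * p * Dh * (4 * z ^ 2 * t ^ 2)) with (Qf z t - u ^ 2)
          by (unfold u, S, Qf; rewrite Hq; destruct He as [-> | ->]; ring).
        apply Z.divide_sub_r; auto. apply dv_pow2; auto.
    + split; auto.
      set (u := e * S - 2 * q * Dh * z ^ 2).
      apply (sq_ratio _ u (2 * q * Dh * z * t)).
      * replace (- e * q * Dh * u ^ 2 - (2 * q * Dh * z * t) ^ 2) with (- e * q * Dh * Qf z t)
          by (unfold u, S, Qf; rewrite Hq; destruct He as [-> | ->]; ring).
        apply Z.divide_mul_r; auto.
      * intros Hu. apply (nd_mul (e * q * Dh) (4 * z ^ 2 * t ^ 2)); [apply nd_mul; [apply nd_mul|]; auto|auto|].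
        replace (e * q * Dh * (4 * z ^ 2 * t ^ 2)) with (Qf z t - u ^ 2)
          by (unfold u, S, Qf; rewrite Hq; destruct He as [-> | ->]; ring).
        apply Z.divide_sub_r; auto. apply dv_pow2; auto.
  - intros [[_ [x1 Hx1]] [_ [x2 Hx2]]].
    pose proof (leg_nd _ _ Hx1 Hap) as Hx1n.
    pose proof (leg_nd _ _ Hx2 Haq) as Hx2n.
    set (e1 := x1 ^ 2 - - e * p * Dh) in *.
    set (e2 := x2 ^ 2 - - e * q * Dh) in *.
    set (t1 := x1 + x2).
    set (S1 := t1 ^ 2 + e * (p + q) * Dh).
    assert (HQ1 : (l | Qf 1 t1)).
    { replace (Qf 1 t1) with ((e1 + e2) * (e1 + e2 + 4 * x1 * x2) + 4 * e1 * e2 - 4 * e * q * Dh * e1 - 4 * e * p * Dh * e2)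
        by (unfold Qf, e1, e2, t1; rewrite Hq; destruct He as [-> | ->]; ring).
      assert (H12 : (l | e1 + e2)) by (apply Z.divide_add_r; auto).
      apply Z.divide_sub_r; [apply Z.divide_sub_r; [apply Z.divide_add_r|]|].
      - apply Z.divide_mul_l; auto.
      - apply Z.divide_mul_r; auto.
      - apply Z.divide_mul_r; auto.
      - apply Z.divide_mul_r; auto. }
    destruct HQ1 as [c1 Hc1].
    set (g := 4 * t1 * S1).
    assert (Hg : ~ (l | g)).
    { apply nd_mul; [apply nd_mul; [apply nd_4|]|].
      - intros Ht1. apply (nd_mul 2 (e * Dh)); [apply nd_2|apply nd_mul; auto|].
        replace (2 * (e * Dh)) with (e2 - e1 - (x2 - x1) * t1) by (unfold e1, e2, t1; rewrite Hq; ring).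
        apply Z.divide_sub_r; [apply Z.divide_sub_r|apply Z.divide_mul_r]; auto.
      - intros HS. apply (nd_mul 2 (x1 * x2)); [apply nd_2|apply nd_mul; auto|].
        replace (2 * (x1 * x2)) with (S1 - e1 - e2) by (unfold S1, e1, e2, t1; ring).
        apply Z.divide_sub_r; [apply Z.divide_sub_r|]; auto. }
    destruct (inv_mod _ _ Hl Hg) as [h [k Hk]].
    set (r := (e - c1) * h).
    set (t0 := t1 + l * r).
    set (c := c1 + r * g + l * r ^ 2 * (6 * t1 ^ 2 + 4 * t1 * l * r + l ^ 2 * r ^ 2 + 2 * e * (p + q) * Dh)).
    assert (HQ0 : Qf 1 t0 = l * c).
    { transitivity (Qf 1 t1 + l * r * g + l ^ 2 * r ^ 2 * (6 * t1 ^ 2 + 4 * t1 * l * r + l ^ 2 * r ^ 2 + 2 * e * (p + q) * Dh)).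
      - unfold Qf, t0, g, S1. ring.
      - rewrite Hc1. unfold c. ring. }
    apply (mk_nonempty p q D d l 1 t0 l (l ^ 3) e c).
    + intros w0. rewrite Hid, HQ0. ring.
    + left. apply nd_1.
    + apply (lift_odd l e c 1); auto using nd_1.
      exists ((c1 - e) * k - r ^ 2 * (6 * t1 ^ 2 + 4 * t1 * l * r + l ^ 2 * r ^ 2 + 2 * e * (p + q) * Dh)).
      unfold c, r. replace (e * 1 ^ 2 - (c1 + (e - c1) * h * g + l * ((e - c1) * h) ^ 2 * (6 * t1 ^ 2 + 4 * t1 * l * ((e - c1) * h) + l ^ 2 * ((e - c1) * h) ^ 2 + 2 * e * (p + q) * Dh)))
        with ((c1 - e) * (g * h - 1) - l * ((e - c1) * h) ^ 2 * (6 * t1 ^ 2 + 4 * t1 * l * ((e - c1) * h) + l ^ 2 * ((e - c1) * h) ^ 2 + 2 * e * (p + q) * Dh)) by ring.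
      rewrite Hk. ring.
Qed.

End Odd.


From Stdlib Require Import ZArith Znumtheory List Lia Zdiv Setoid Morphisms Bool.
Import ListNotations.
Open Scope Z_scope.
#[global] Instance eqm_setoid' N : Equivalence (eqm N) := eqm_setoid N.
#[global] Instance Zplus_eqm' N : Proper (eqm N ==> eqm N ==> eqm N) Z.add := Zplus_eqm N.
#[global] Instance Zminus_eqm' N : Proper (eqm N ==> eqm N ==> eqm N) Z.sub := Zminus_eqm N.
#[global] Instance Zmult_eqm' N : Proper (eqm N ==> eqm N ==> eqm N) Z.mul := Zmult_eqm N.
#[global] Instance Zopp_eqm' N : Proper (eqm N ==> eqm N) Z.opp := Zopp_eqm N.

Definition rhs (p D d z t : Z) := d*d*(t*t*t*t) + 4*(p+1)*D*d*(z*z)*(t*t) + 4*(D*D)*(z*z*z*z).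
Definition cf (p D d z w t : Z) := d*w*w - rhs p D d z t.

Lemma cf_eq p q D d z w t : q = p + 2 -> Cd_form p q D d z w t = cf p D d z w t.
Proof. intros ->. unfold Cd_form, cf, rhs. ring. Qed.

Lemma cf_mod N p D d z w t : N <> 0 ->
  cf p D d z w t mod N = cf (p mod N) (D mod N) (d mod N) (z mod N) (w mod N) (t mod N) mod N.
Proof.
  intros HN. change (eqm N (cf p D d z w t) (cf (p mod N) (D mod N) (d mod N) (z mod N) (w mod N) (t mod N))).
  unfold cf, rhs. rewrite !(Zmod_eqm N). reflexivity.
Qed.

Definition rng (N : Z) := map Z.of_nat (seq 0 (Z.to_nat N)).

Lemma in_rng N x : 0 <= x < N -> In x (rng N).
Proof.
  intros H. unfold rng. apply in_map_iff. exists (Z.to_nat x). split; [lia|].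
  apply in_seq. lia.
Qed.

Definition Wl N M d := nodup Z.eq_dec (map (fun w => (d*w*w) mod N) (rng M)).

Definition chk N M (ds : list Z) (cond : Z -> Z -> Z -> bool) :=
  forallb (fun d => let W := Wl N M d in forallb (fun p => forallb (fun D =>
    if Z.odd p && Z.odd D then cond d p D || forallb (fun z => forallb (fun t =>
        if Z.odd z || Z.odd t then
          let r := rhs p D d z t in negb (existsb (fun v => (v - r) mod N =? 0) W)
        else true) (rng M)) (rng M)
    else true) (rng M)) (rng M)) ds.

Lemma odd_mod N x : 0 < N -> Z.even N = true -> Z.odd (x mod N) = Z.odd x.
Proof.
  intros HN He. assert (Ho : Z.odd N = false) by (rewrite <- Z.negb_even, He; auto).
  rewrite (Z.div_mod x N) at 2 by lia.
  rewrite Z.odd_add, Z.odd_mul, Ho. simpl. reflexivity.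
Qed.

Lemma chk_sound N M ds cond : 0 < N -> 0 < M -> Z.even M = true -> chk N M ds cond = true ->
  forall d d' p D z w t, In d' ds ->
    cf p D d z w t mod N = cf (p mod M) (D mod M) d' (z mod M) (w mod M) (t mod M) mod N ->
    Z.odd p = true -> Z.odd D = true ->
    (Z.odd z = true \/ Z.odd t = true) -> (N | cf p D d z w t) ->
    cond d' (p mod M) (D mod M) = true.
Proof.
  intros HN HM He Hc d d' p D z w t Hd Hred Hp HD Hzt Hdiv.
  unfold chk in Hc. rewrite forallb_forall in Hc. specialize (Hc _ Hd). cbv zeta in Hc.
  rewrite forallb_forall in Hc. specialize (Hc (p mod M) ltac:(apply in_rng; apply Z.mod_pos_bound; lia)).
  rewrite forallb_forall in Hc. specialize (Hc (D mod M) ltac:(apply in_rng; apply Z.mod_pos_bound; lia)).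
  rewrite !odd_mod in Hc by auto. rewrite Hp, HD in Hc. simpl in Hc.
  apply Bool.orb_true_iff in Hc. destruct Hc as [Hc|Hc]; auto. exfalso.
  rewrite forallb_forall in Hc. specialize (Hc (z mod M) ltac:(apply in_rng; apply Z.mod_pos_bound; lia)).
  rewrite forallb_forall in Hc. specialize (Hc (t mod M) ltac:(apply in_rng; apply Z.mod_pos_bound; lia)).
  rewrite !odd_mod in Hc by auto.
  assert (Hzt' : Z.odd z || Z.odd t = true) by (destruct Hzt as [-> | ->]; auto using Bool.orb_true_r).
  rewrite Hzt' in Hc. cbv zeta in Hc. apply Bool.negb_true_iff in Hc.
  assert (Hin : In ((d' * (w mod M) * (w mod M)) mod N) (Wl N M d')).
  { unfold Wl. apply nodup_In. apply in_map_iff. exists (w mod M). split; auto.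
    apply in_rng; apply Z.mod_pos_bound; lia. }
  assert (E : existsb (fun v => (v - rhs (p mod M) (D mod M) d' (z mod M) (t mod M)) mod N =? 0) (Wl N M d') = true).
  { apply existsb_exists. eexists; split; [exact Hin|]. apply Z.eqb_eq.
    rewrite Zminus_mod_idemp_l.
    change (cf (p mod M) (D mod M) d' (z mod M) (w mod M) (t mod M) mod N = 0).
    rewrite <- Hred. apply Z.mod_divide; auto; lia. }
  rewrite E in Hc; discriminate.
Qed.

Lemma shift16 p D e z w t :
  cf p D (2 * e) z w t mod 64 = cf (p mod 16) (D mod 16) (2 * e) (z mod 16) (w mod 16) (t mod 16) mod 64.
Proof.
  pose proof (Z.div_mod p 16 ltac:(lia)) as Hp.
  pose proof (Z.div_mod D 16 ltac:(lia)) as HD.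
  pose proof (Z.div_mod z 16 ltac:(lia)) as Hz.
  pose proof (Z.div_mod w 16 ltac:(lia)) as Hw.
  pose proof (Z.div_mod t 16 ltac:(lia)) as Ht.
  set (pr := p mod 16) in *. set (Dr := D mod 16) in *. set (zr := z mod 16) in *.
  set (wr := w mod 16) in *. set (tr := t mod 16) in *.
  set (a := p / 16) in *. set (b := D / 16) in *. set (c := z / 16) in *.
  set (f := w / 16) in *. set (g := t / 16) in *.
  rewrite Hp, HD, Hz, Hw, Ht.
  replace (cf (16 * a + pr) (16 * b + Dr) (2 * e) (16 * c + zr) (16 * f + wr) (16 * g + tr))
    with (cf pr Dr (2 * e) zr wr tr + ((1)*e*f*wr + (8)*e*f^2 + (-4)*e^2*g*tr^3 + (-96)*e^2*g^2*tr^2 + (-1024)*e^2*g^3*tr + (-4096)*e^2*g^4 + (-4)*Dr*e*g*pr*tr*zr^2 + (-32)*Dr*e*g^2*pr*zr^2 + (-4)*Dr*c*e*pr*tr^2*zr + (-128)*Dr*c*e*g*pr*tr*zr + (-1024)*Dr*c*e*g^2*pr*zr + (-32)*Dr*c^2*e*pr*tr^2 + (-1024)*Dr*c^2*e*g*pr*tr + (-8192)*Dr*c^2*e*g^2*pr + (-2)*b*e*pr*tr^2*zr^2 + (-64)*b*e*g*pr*tr*zr^2 + (-512)*b*e*g^2*pr*zr^2 + (-64)*b*c*e*pr*tr^2*zr + (-2048)*b*c*e*g*pr*tr*zr + (-16384)*b*c*e*g^2*pr*zr + (-512)*b*c^2*e*pr*tr^2 + (-16384)*b*c^2*e*g*pr*tr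 + (-131072)*b*c^2*e*g^2*pr + (-2)*Dr*a*e*tr^2*zr^2 + (-64)*Dr*a*e*g*tr*zr^2 + (-512)*Dr*a*e*g^2*zr^2 + (-64)*Dr*a*c*e*tr^2*zr + (-2048)*Dr*a*c*e*g*tr*zr + (-16384)*Dr*a*c*e*g^2*zr + (-512)*Dr*a*c^2*e*tr^2 + (-16384)*Dr*a*c^2*e*g*tr + (-131072)*Dr*a*c^2*e*g^2 + (-32)*a*b*e*tr^2*zr^2 + (-1024)*a*b*e*g*tr*zr^2 + (-8192)*a*b*e*g^2*zr^2 + (-1024)*a*b*c*e*tr^2*zr + (-32768)*a*b*c*e*g*tr*zr + (-262144)*a*b*c*e*g^2*zr + (-8192)*a*b*c^2*e*tr^2 + (-262144)*a*b*c^2*e*g*tr + (-2097152)*a*b*c^2*e*g^2 + (-4)*Dr*e*g*tr*zr^2 + (-32)*Dr*e*g^2*zr^2 + (-4)*Dr*c*e*tr^2*zr + (-128)*Dr*c*e*g*tr*zr + (-1024)*Dr*c*e*g^2*zr + (-32)*Dr*c^2*e*tr^2 + (-1024)*Dr*c^2*e*g*tr + (-8192)*Dr*c^2*e*g^2 + (-2)*b*e*tr^2*zr^2 + (-64)*b*e*g*tr*zr^2 + (-512)*b*e*g^2*zr^2 + (-64)*b*c*e*tr^2*zr + (-2048)*b*c*e*g*tr*zr + (-16384)*b*c*e*g^2*zr + (-512)*b*c^2*e*tr^2 + (-16384)*b*c^2*e*g*tr + (-131072)*b*c^2*e*g^2 + (-4)*Dr^2*c*zr^3 + (-96)*Dr^2*c^2*zr^2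 + (-1024)*Dr^2*c^3*zr + (-4096)*Dr^2*c^4 + (-2)*Dr*b*zr^4 + (-128)*Dr*b*c*zr^3 + (-3072)*Dr*b*c^2*zr^2 + (-32768)*Dr*b*c^3*zr + (-131072)*Dr*b*c^4 + (-16)*b^2*zr^4 + (-1024)*b^2*c*zr^3 + (-24576)*b^2*c^2*zr^2 + (-262144)*b^2*c^3*zr + (-1048576)*b^2*c^4) * 64) by (unfold cf, rhs; ring).
  apply Z_mod_plus_full.
Qed.

Definition condC (d p D : Z) := negb (Z.odd d) || (d mod 4 =? 1).
Lemma chkC : chk 16 16 (rng 16) condC = true.
Proof. vm_compute. reflexivity. Qed.

Definition condB1 (d p D : Z) := (D * (D + 2 * p + 2)) mod 16 =? 1.
Lemma chkB1 : chk 64 16 [2] condB1 = true.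
Proof. vm_compute. reflexivity. Qed.

Definition condB2 (d p D : Z) := (D * (- D + 2 * p + 2)) mod 16 =? 3.
Lemma chkB2 : chk 64 16 [-2] condB2 = true.
Proof. vm_compute. reflexivity. Qed.


From Stdlib Require Import ZArith Znumtheory List Lia Zdiv Setoid Morphisms Bool.
Import ListNotations.
Open Scope Z_scope.

Lemma odd_of x : ~ (2 | x) -> Z.odd x = true.
Proof. intros H. destruct (not2_odd _ H) as [k ->]. rewrite Z.add_comm, Z.odd_add_mul_2. reflexivity. Qed.

Lemma nd2_1 : ~ (2 | 1).
Proof. intros [c Hc]; lia. Qed.

Lemma two_B1 p q D : q = p + 2 -> ~ (2 | p) -> ~ (2 | D) ->
  (Cd_Ql_nonempty p q D 2 2 <-> (D * (D + 2 * p + 2)) mod 16 = 1).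
Proof.
  intros Hq Hp HD. split.
  - intros Hne. destruct (reduce_level _ _ _ _ _ prime_2 Hne 6%nat) as [z [w [t [Hpr Hf]]]].
    change (2 ^ Z.of_nat 6) with 64 in Hf. rewrite (cf_eq _ _ _ _ _ _ _ Hq) in Hf.
    assert (Hc := chk_sound 64 16 [2] condB1 ltac:(lia) ltac:(lia) eq_refl chkB1 2 2 p D z w t
      ltac:(simpl; auto) (shift16 p D 1 z w t) (odd_of _ Hp) (odd_of _ HD)
      ltac:(destruct Hpr as [H|H]; [left|right]; apply odd_of; auto) Hf).
    unfold condB1 in Hc. apply Z.eqb_eq in Hc. rewrite <- Hc.
    change (eqm 16 (D * (D + 2 * p + 2)) (D mod 16 * (D mod 16 + 2 * (p mod 16) + 2))).
    rewrite !(Zmod_eqm 16). reflexivity.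
  - intros E. set (j := (D * (D + 2 * p + 2)) / 16).
    assert (Ej : D * (D + 2 * p + 2) = 16 * j + 1) by (pose proof (Z.div_mod (D * (D + 2 * p + 2)) 16); lia).
    apply (mk_nonempty p q D 2 2 1 1 2 8 1 (8 * j + 1)).
    + intros w0. transitivity (8 * w0 ^ 2 - 4 * (D * (D + 2 * p + 2)) - 4).
      * unfold Cd_form. rewrite Hq. ring.
      * rewrite Ej. ring.
    + left. apply nd2_1.
    + apply lift_two. apply nd2_1. exists (- j). ring.
Qed.

Lemma two_B2 p q D : q = p + 2 -> ~ (2 | p) -> ~ (2 | D) ->
  (Cd_Ql_nonempty p q D (-2) 2 <-> (D * (- D + 2 * p + 2)) mod 16 = 3).
Proof.
  intros Hq Hp HD. split.
  - intros Hne. destruct (reduce_level _ _ _ _ _ prime_2 Hne 6%nat) as [z [w [t [Hpr Hf]]]].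
    change (2 ^ Z.of_nat 6) with 64 in Hf. rewrite (cf_eq _ _ _ _ _ _ _ Hq) in Hf.
    assert (Hc := chk_sound 64 16 [-2] condB2 ltac:(lia) ltac:(lia) eq_refl chkB2 (-2) (-2) p D z w t
      ltac:(simpl; auto) (shift16 p D (-1) z w t) (odd_of _ Hp) (odd_of _ HD)
      ltac:(destruct Hpr as [H|H]; [left|right]; apply odd_of; auto) Hf).
    unfold condB2 in Hc. apply Z.eqb_eq in Hc. rewrite <- Hc.
    change (eqm 16 (D * (- D + 2 * p + 2)) (D mod 16 * (- (D mod 16) + 2 * (p mod 16) + 2))).
    rewrite !(Zmod_eqm 16). reflexivity.
  - intros E. set (j := (D * (- D + 2 * p + 2)) / 16).
    assert (Ej : D * (- D + 2 * p + 2) = 16 * j + 3) by (pose proof (Z.div_mod (D * (- D + 2 * p + 2)) 16); lia).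
    apply (mk_nonempty p q D (-2) 2 1 1 2 8 (-1) (- (8 * j + 1))).
    + intros w0. transitivity (- 8 * w0 ^ 2 + 4 * (D * (- D + 2 * p + 2)) - 4).
      * unfold Cd_form. rewrite Hq. ring.
      * rewrite Ej. ring.
    + left. apply nd2_1.
    + apply lift_two. intros [c Hc]; lia. exists j. ring.
Qed.

Lemma two_C p q D d : q = p + 2 -> ~ (2 | p) -> ~ (2 | D) -> ~ (2 | d) ->
  (Cd_Ql_nonempty p q D d 2 <-> d mod 4 = 1).
Proof.
  intros Hq Hp HD Hd. split.
  - intros Hne. destruct (reduce_level _ _ _ _ _ prime_2 Hne 4%nat) as [z [w [t [Hpr Hf]]]].
    change (2 ^ Z.of_nat 4) with 16 in Hf. rewrite (cf_eq _ _ _ _ _ _ _ Hq) in Hf.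
    assert (Hc := chk_sound 16 16 (rng 16) condC ltac:(lia) ltac:(lia) eq_refl chkC d (d mod 16) p D z w t
      ltac:(apply in_rng; apply Z.mod_pos_bound; lia) (cf_mod 16 p D d z w t ltac:(lia)) (odd_of _ Hp) (odd_of _ HD)
      ltac:(destruct Hpr as [H|H]; [left|right]; apply odd_of; auto) Hf).
    unfold condC in Hc. rewrite odd_mod in Hc by (auto; lia). rewrite (odd_of _ Hd) in Hc. simpl in Hc.
    apply Z.eqb_eq in Hc. rewrite <- Zmod_div_mod in Hc; auto; try lia. exists 4; reflexivity.
  - intros E. destruct (not2_odd _ Hp) as [a Ha]. destruct (not2_odd _ HD) as [b Hb].
    assert (Hk : d = 8 * (d / 8) + 1 \/ d = 8 * (d / 8) + 5) by (pose proof (Z.div_mod d 8); pose proof (Z.mod_pos_bound d 8); pose proof (Z.div_mod d 4); lia).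
    set (k := d / 8) in *.
    destruct Hk as [Hk|Hk].
    + apply (mk_nonempty p q D d 2 0 1 1 1 d (d ^ 2)).
      * intros w0. unfold Cd_form. ring.
      * right. apply nd2_1.
      * apply lift_two; auto. exists (- (8 * k + 1) * k). rewrite Hk. ring.
    + apply (mk_nonempty p q D d 2 1 1 1 1 d (d ^ 2 + 4 * (p + 1) * D * d + 4 * D ^ 2)).
      * intros w0. unfold Cd_form. rewrite Hq. ring.
      * right. apply nd2_1.
      * apply lift_two; auto.
        exists (- (8 * k ^ 2 + 9 * k + 3) - 2 * (b ^ 2 + b) - (a + 1) * (2 * b + 1) * (8 * k + 5)).
        rewrite Hk, Ha, Hb. ring.
Qed.


From Stdlib Require Import ZArith Znumtheory List Lia Zpow_facts.
Open Scope Z_scope.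

Lemma cong_pow a r l e : 0 < l -> a mod l = r mod l -> 0 <= e -> (l | a ^ e - r ^ e).
Proof.
  intros Hl H He. apply Z.mod_divide; [lia|].
  rewrite Zminus_mod, (Zpower_mod a), (Zpower_mod r), H by lia.
  rewrite Z.sub_diag. reflexivity.
Qed.

Lemma prime_nat l : prime l -> Peano.lt 1 (Z.to_nat l) /\
  (forall d, (exists k, Z.to_nat l = Nat.mul k d) -> d = 1%nat \/ d = Z.to_nat l).
Proof.
  intros Hl. pose proof (prime_ge2 _ Hl). split; [lia|].
  intros d [k Hk].
  assert (Hdv : (Z.of_nat d | l)).
  { exists (Z.of_nat k). rewrite <- Nat2Z.inj_mul, <- Hk. lia. }
  destruct (prime_divisors _ Hl _ Hdv) as [H1|[H1|[H1|H1]]]; lia.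
Qed.

Lemma ZFermat l a : prime l -> ~ (l | a) -> (l | a ^ (l - 1) - 1).
Proof.
  intros Hl Ha. pose proof (prime_ge2 _ Hl) as Hl2.
  destruct (prime_nat _ Hl) as [Hn1 Hnd].
  set (r := a mod l). pose proof (Z.mod_pos_bound a l ltac:(lia)) as Hr. fold r in Hr.
  assert (Hnr : ~ (exists k, Z.to_nat r = Nat.mul k (Z.to_nat l))).
  { intros [k Hk]. apply Ha. exists (a / l + Z.of_nat k).
    pose proof (Z.div_mod a l ltac:(lia)). fold r in H.
    apply (f_equal Z.of_nat) in Hk. rewrite Nat2Z.inj_mul, !Z2Nat.id in Hk by lia.
    transitivity (l * (a / l) + r); [exact H|]. rewrite Hk. ring. }
  destruct (@MC.fermatN _ _ Hn1 Hnd Hnr) as [q Hq].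
  apply (f_equal Z.of_nat) in Hq. rewrite Nat2Z.inj_pow, Nat2Z.inj_add, Nat2Z.inj_mul, Z2Nat.id in Hq by lia.
  rewrite Nat2Z.inj_pred, Z2Nat.id in Hq by lia. simpl in Hq. rewrite <- Z.sub_1_r in Hq.
  replace (a ^ (l - 1) - 1) with ((a ^ (l - 1) - r ^ (l - 1)) + (r ^ (l - 1) - 1)) by ring.
  apply Z.divide_add_r.
  - apply cong_pow; try lia. unfold r. rewrite Z.mod_mod; lia.
  - rewrite Hq. exists (Z.of_nat q). ring.
Qed.

Lemma ZEuler l m a : prime l -> l = 2 * m + 1 -> (l | a ^ m - 1) -> exists x, (l | x ^ 2 - a).
Proof.
  intros Hl Hm Ha. pose proof (prime_ge2 _ Hl) as Hl2.
  destruct (prime_nat _ Hl) as [Hn1 Hnd].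
  set (r := a mod l). pose proof (Z.mod_pos_bound a l ltac:(lia)) as Hr. fold r in Hr.
  assert (Hra : (l | a - r)) by (exists (a / l); pose proof (Z.div_mod a l ltac:(lia)); unfold r; lia).
  assert (Hrm : (l | r ^ m - 1)).
  { replace (r ^ m - 1) with ((a ^ m - 1) - (a ^ m - r ^ m)) by ring.
    apply Z.divide_sub_r; auto. apply cong_pow; try lia. unfold r. rewrite Z.mod_mod; lia. }
  assert (Hrm1 : (r ^ m) mod l = 1).
  { destruct Hrm as [k Hk]. replace (r ^ m) with (1 + k * l) by lia.
    rewrite Z_mod_plus_full. apply Z.mod_small; lia. }
  assert (Hpos : 0 <= r ^ m) by (apply Z.pow_nonneg; lia).
  assert (Hq : exists q, Nat.pow (Z.to_nat r) (Z.to_nat m) = Nat.add (Nat.mul q (Z.to_nat l)) 1).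
  { exists (Z.to_nat (r ^ m / l)). apply Nat2Z.inj.
    rewrite Nat2Z.inj_pow, Nat2Z.inj_add, Nat2Z.inj_mul, !Z2Nat.id by (try apply Z.div_pos; lia).
    pose proof (Z.div_mod (r ^ m) l ltac:(lia)). simpl. lia. }
  assert (Hn : Z.to_nat l = Nat.add (Nat.mul 2 (Z.to_nat m)) 1) by lia.
  destruct (@MC.eulerN _ _ _ Hn1 Hnd Hn Hq) as [x [q1 [q2 Hx]]].
  apply (f_equal Z.of_nat) in Hx. rewrite !Nat2Z.inj_add, !Nat2Z.inj_mul, !Z2Nat.id in Hx by lia.
  exists (Z.of_nat x). replace (Z.of_nat x ^ 2 - a) with ((Z.of_nat x * Z.of_nat x - r) - (a - r)) by ring.
  apply Z.divide_sub_r; auto. exists (Z.of_nat q2 - Z.of_nat q1). lia.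
Qed.


From Stdlib Require Import ZArith Znumtheory List Lia Zpow_facts.
Open Scope Z_scope.

Fixpoint pr (f : Z -> Z) (a : Z) (r : nat) : Z :=
  match r with O => 1 | S r' => f (a + 1) * pr f (a + 1) r' end.

Lemma pr_split f a r1 r2 : pr f a (r1 + r2) = pr f a r1 * pr f (a + Z.of_nat r1) r2.
Proof.
  revert a; induction r1; intros a.
  - change (0 + r2)%nat with r2. change (Z.of_nat 0) with 0. rewrite Z.add_0_r. cbn [pr]. ring.
  - change (S r1 + r2)%nat with (S (r1 + r2)). cbn [pr]. rewrite IHr1.
    replace (a + 1 + Z.of_nat r1) with (a + Z.of_nat (S r1)) by lia. ring.
Qed.

Lemma pr_ext f g a r : (forall j, f j = g j) -> pr f a r = pr g a r.
Proof. intros H; revert a; induction r; intros a; simpl; auto. rewrite H, IHr; auto. Qed.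

Lemma pr_scale c f a r : pr (fun j => c * f j) a r = c ^ (Z.of_nat r) * pr f a r.
Proof.
  revert a; induction r; intros a; cbn [pr].
  - change (Z.of_nat 0) with 0. ring.
  - rewrite IHr, Nat2Z.inj_succ, Z.pow_succ_r by lia. ring.
Qed.

Lemma pr_last f a r : pr f a (S r) = pr f a r * f (a + Z.of_nat r + 1).
Proof. replace (S r) with (r + 1)%nat by lia. rewrite pr_split. cbn [pr]. ring_simplify. f_equal. Qed.

Definition Fc n := pr (fun j => j) 0 n.
Definition Ev h := pr (fun j => 2 * j) 0 h.
Definition Od r := pr (fun j => 2 * j - 1) 0 r.

Lemma EO h : Ev h * Od h = Fc (2 * h) /\ Ev h * Od (S h) = Fc (2 * h + 1).
Proof.
  unfold Ev, Od, Fc. induction h as [|h [IH1 IH2]].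
  - cbn. auto.
  - assert (A : pr (fun j => 2 * j) 0 (S h) * pr (fun j => 2 * j - 1) 0 (S h) = pr (fun j => j) 0 (2 * S h)).
    { rewrite (pr_last (fun j => 2 * j)), (pr_last (fun j => 2 * j - 1)).
      replace (2 * S h)%nat with (S (S (2 * h))) by lia.
      rewrite (pr_last (fun j => j)), (pr_last (fun j => j)).
      rewrite <- IH1. rewrite ?Nat2Z.inj_succ, ?Nat2Z.inj_mul. ring. }
    split; auto.
    rewrite (pr_last (fun j => 2 * j - 1)). rewrite Z.mul_assoc, A. replace (2 * S h + 1)%nat with (S (2 * S h)) by lia.
    rewrite (pr_last (fun j => j)). rewrite ?Nat2Z.inj_succ, ?Nat2Z.inj_mul. f_equal; lia.
Qed.

Lemma refl_odd r h : pr (fun j => 2 * (Z.of_nat h + Z.of_nat r) + 1 - 2 * j) (Z.of_nat h) r = Od r.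
Proof.
  revert h; induction r; intros h; cbn [pr]; [reflexivity|].
  replace (Z.of_nat h + 1) with (Z.of_nat (S h)) by lia.
  rewrite (pr_ext _ (fun j => 2 * (Z.of_nat (S h) + Z.of_nat r) + 1 - 2 * j)) by (intros; lia).
  rewrite IHr. unfold Od. rewrite pr_last. rewrite Z.mul_comm. f_equal. lia.
Qed.

Lemma pr_cong l f g a r : (forall j, (l | f j + g j)) -> (l | pr f a r - (-1) ^ Z.of_nat r * pr g a r).
Proof.
  intros H. revert a; induction r; intros a; cbn [pr].
  - exists 0. change (Z.of_nat 0) with 0. ring.
  - rewrite Nat2Z.inj_succ, Z.pow_succ_r by lia.
    replace (f (a + 1) * pr f (a + 1) r - -1 * (-1) ^ Z.of_nat r * (g (a + 1) * pr g (a + 1) r))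
      with (f (a + 1) * (pr f (a + 1) r - (-1) ^ Z.of_nat r * pr g (a + 1) r) + (-1) ^ Z.of_nat r * pr g (a + 1) r * (f (a + 1) + g (a + 1))) by ring.
    apply Z.divide_add_r; apply Z.divide_mul_r; auto.
Qed.

Lemma Fc_nd l n : prime l -> Z.of_nat n < l -> ~ (l | Fc n).
Proof.
  intros Hl. induction n; intros Hn.
  - unfold Fc; cbn [pr]. intros H. apply Z.divide_1_r in H. destruct Hl. lia.
  - unfold Fc. rewrite pr_last. fold (Fc n). intros H.
    destruct (prime_mult _ Hl _ _ H) as [H1|H1].
    + apply IHn; auto. lia.
    + apply Z.divide_pos_le in H1; lia.
Qed.

Lemma gauss2 l h r : prime l -> l = 2 * (Z.of_nat h + Z.of_nat r) + 1 -> (r = h \/ r = S h) ->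
  (l | 2 ^ (Z.of_nat (h + r)) - (-1) ^ (Z.of_nat r)).
Proof.
  intros Hl Hlr Hr.
  assert (Hm : (l | (2 ^ Z.of_nat (h + r) - (-1) ^ Z.of_nat r) * Fc (h + r))).
  { assert (E1 : 2 ^ Z.of_nat (h + r) * Fc (h + r) = Ev h * pr (fun j => 2 * j) (Z.of_nat h) r).
    { unfold Fc, Ev. rewrite <- pr_scale. rewrite pr_split. simpl. reflexivity. }
    assert (E2 : Ev h * Od r = Fc (h + r)).
    { destruct (EO h) as [A B]. destruct Hr as [-> | ->].
      - rewrite A. f_equal. lia.
      - rewrite B. f_equal. lia. }
    rewrite Z.mul_sub_distr_r, E1, <- E2, <- (refl_odd r h).
    replace (Ev h * pr (fun j => 2 * j) (Z.of_nat h) r - (-1) ^ Z.of_nat r * (Ev h * pr (fun j => 2 * (Z.of_nat h + Z.of_nat r) + 1 - 2 * j) (Z.of_nat h) r))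
      with (Ev h * (pr (fun j => 2 * j) (Z.of_nat h) r - (-1) ^ Z.of_nat r * pr (fun j => 2 * (Z.of_nat h + Z.of_nat r) + 1 - 2 * j) (Z.of_nat h) r)) by ring.
    apply Z.divide_mul_r. apply pr_cong. intros j. exists 1. lia. }
  destruct (prime_mult _ Hl _ _ Hm) as [H|H]; auto.
  exfalso. apply (Fc_nd l (h + r) Hl); auto. lia.
Qed.


From Stdlib Require Import ZArith Znumtheory List Lia Zpow_facts.
Open Scope Z_scope.

Lemma negpow_even j : 0 <= j -> (-1) ^ (2 * j) = 1.
Proof. intros. rewrite Z.pow_mul_r by lia. change ((-1) ^ 2) with 1. apply Z.pow_1_l; lia. Qed.

Lemma negpow_odd j : 0 <= j -> (-1) ^ (2 * j + 1) = -1.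
Proof. intros. rewrite Z.pow_add_r, negpow_even by lia. reflexivity. Qed.

Lemma pow_cong l A B e : 0 < l -> (l | A - B) -> 0 <= e -> (l | A ^ e - B ^ e).
Proof.
  intros Hl [k Hk] He. apply cong_pow; auto.
  replace A with (B + k * l) by lia. apply Z_mod_plus_full.
Qed.

Lemma leg_iff l m a : prime l -> l = 2 * m + 1 -> 0 <= m -> ~ (l | a) ->
  (legendre_one a l <-> (l | a ^ m - 1)).
Proof.
  intros Hl Hm Hm0 Ha. pose proof (prime_ge2 _ Hl). split.
  - intros [_ [x Hx]].
    assert (Hxn : ~ (l | x)).
    { intros Hx'. apply Ha. replace a with (x ^ 2 - (x ^ 2 - a)) by ring.
      apply Z.divide_sub_r; auto. rewrite Z.pow_2_r. apply Z.divide_mul_l; auto. }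
    pose proof (ZFermat l x Hl Hxn) as HF.
    replace (l - 1) with (2 * m) in HF by lia. rewrite Z.pow_mul_r in HF by lia.
    replace (a ^ m - 1) with (((x ^ 2) ^ m - 1) - ((x ^ 2) ^ m - a ^ m)) by ring.
    apply Z.divide_sub_r; auto. apply pow_cong; auto; lia.
  - intros Hh. split; auto. apply (ZEuler l m a); auto.
Qed.

Lemma nd2 l : prime l -> l <> 2 -> ~ (l | 2).
Proof. intros Hl Hl2 H. pose proof (prime_ge2 _ Hl). apply Z.divide_pos_le in H; lia. Qed.

Lemma leg_pm2 l : prime l -> l <> 2 ->
  (legendre_one 2 l <-> l mod 8 = 1 \/ l mod 8 = 7) /\
  (legendre_one (-2) l <-> l mod 8 = 1 \/ l mod 8 = 3).
Proof.
  intros Hl Hl2. pose proof (prime_ge2 _ Hl) as Hge.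
  assert (Hodd : l mod 2 = 1).
  { pose proof (Z.mod_pos_bound l 2 ltac:(lia)).
    destruct (Z.eq_dec (l mod 2) 0) as [E|E]; [|lia].
    exfalso. assert (H2 : (2 | l)) by (exists (l / 2); pose proof (Z.div_mod l 2 ltac:(lia)); lia).
    destruct (prime_divisors _ Hl 2 H2) as [?|[?|[?|?]]]; lia. }
  set (k := l / 8). pose proof (Z.div_mod l 8 ltac:(lia)) as Hdm. pose proof (Z.mod_pos_bound l 8 ltac:(lia)) as Hb.
  assert (Hk0 : 0 <= k) by (apply Z.div_pos; lia).
  assert (Hnd2 : ~ (l | 2)) by (apply nd2; auto).
  assert (Hndm2 : ~ (l | -2)) by (intros H; apply Hnd2; apply Z.divide_opp_r in H; exact H).
  assert (Hk : l = 8 * k + 1 \/ l = 8 * k + 3 \/ l = 8 * k + 5 \/ l = 8 * k + 7).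
  { pose proof (Z.div_mod l 2 ltac:(lia)). fold k in Hdm. lia. }
  set (K := Z.to_nat k).
  assert (HK : Z.of_nat K = k) by (unfold K; lia).
  assert (Hneg : forall m, (-2) ^ m = (-1) ^ m * 2 ^ m) by (intros; rewrite <- Z.pow_mul_l; reflexivity).
  assert (Hsplit : forall m, (l | 2 ^ m + 1) -> ~ (l | 2 ^ m - 1)).
  { intros m H1 H2. apply Hnd2. replace 2 with ((2 ^ m + 1) - (2 ^ m - 1)) by ring. apply Z.divide_sub_r; auto. }
  destruct Hk as [Hk|[Hk|[Hk|Hk]]].
  -
    pose proof (gauss2 l (2 * K) (2 * K) Hl ltac:(lia) ltac:(left; reflexivity)) as G.
    replace (Z.of_nat (2 * K + 2 * K)) with (2 * (2 * k)) in G by lia.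
    replace (Z.of_nat (2 * K)) with (2 * k) in G by lia. rewrite negpow_even in G by lia.
    rewrite !(leg_iff l (2 * (2 * k))) by (auto; lia).
    rewrite Hneg, negpow_even by lia. rewrite Z.mul_1_l. split; split; auto; intros; lia.
  -
    pose proof (gauss2 l (2 * K) (S (2 * K)) Hl ltac:(lia) ltac:(right; reflexivity)) as G.
    replace (Z.of_nat (2 * K + S (2 * K))) with (2 * (2 * k) + 1) in G by lia.
    replace (Z.of_nat (S (2 * K))) with (2 * k + 1) in G by lia. rewrite negpow_odd in G by lia.
    replace (2 ^ (2 * (2 * k) + 1) - -1) with (2 ^ (2 * (2 * k) + 1) + 1) in G by ring.
    rewrite !(leg_iff l (2 * (2 * k) + 1)) by (auto; lia).
    rewrite Hneg, negpow_odd by lia. split; split.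
    + intros H. exfalso. eapply Hsplit; eauto.
    + lia.
    + intros _. lia.
    + intros _. replace (-1 * 2 ^ (2 * (2 * k) + 1) - 1) with (- (2 ^ (2 * (2 * k) + 1) + 1)) by ring.
      apply Z.divide_opp_r. auto.
  -
    pose proof (gauss2 l (S (2 * K)) (S (2 * K)) Hl ltac:(lia) ltac:(left; reflexivity)) as G.
    replace (Z.of_nat (S (2 * K) + S (2 * K))) with (2 * (2 * k + 1)) in G by lia.
    replace (Z.of_nat (S (2 * K))) with (2 * k + 1) in G by lia. rewrite negpow_odd in G by lia.
    replace (2 ^ (2 * (2 * k + 1)) - -1) with (2 ^ (2 * (2 * k + 1)) + 1) in G by ring.
    rewrite !(leg_iff l (2 * (2 * k + 1))) by (auto; lia).
    rewrite Hneg, negpow_even by lia. rewrite Z.mul_1_l. split; split.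
    + intros H. exfalso. eapply Hsplit; eauto.
    + lia.
    + intros H. exfalso. eapply Hsplit; eauto.
    + lia.
  -
    pose proof (gauss2 l (S (2 * K)) (S (S (2 * K))) Hl ltac:(lia) ltac:(right; reflexivity)) as G.
    replace (Z.of_nat (S (2 * K) + S (S (2 * K)))) with (2 * (2 * k + 1) + 1) in G by lia.
    replace (Z.of_nat (S (S (2 * K)))) with (2 * (k + 1)) in G by lia. rewrite negpow_even in G by lia.
    rewrite !(leg_iff l (2 * (2 * k + 1) + 1)) by (auto; lia).
    rewrite Hneg, negpow_odd by lia. split; split.
    + intros _. lia.
    + intros _. auto.
    + intros H. exfalso. apply Hnd2.
      replace 2 with (- ((2 ^ (2 * (2 * k + 1) + 1) - 1) + (-1 * 2 ^ (2 * (2 * k + 1) + 1) - 1))) by ring.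
      apply Z.divide_opp_r. apply Z.divide_add_r; auto.
    + lia.
Qed.

Lemma leg_m1 l : prime l -> l mod 4 = 3 -> ~ legendre_one (-1) l.
Proof.
  intros Hl H4. pose proof (prime_ge2 _ Hl).
  pose proof (Z.div_mod l 4 ltac:(lia)) as Hd. set (k := l / 4) in *.
  assert (Hk0 : 0 <= k) by (apply Z.div_pos; lia).
  assert (Hn : ~ (l | -1)) by (intros Hx; apply Z.divide_opp_r in Hx; apply Z.divide_1_r in Hx; lia).
  rewrite (leg_iff l (2 * k + 1)) by (auto; lia).
  rewrite negpow_odd by lia. intros Hx. apply (nd2 l Hl ltac:(lia)).
  replace 2 with (- (-1 - 1)) by ring. apply Z.divide_opp_r. auto.
Qed.


From Stdlib Require Import ZArith Znumtheory List Lia.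
Open Scope Z_scope.

Lemma prime_dvd_prime l r : prime l -> prime r -> (l | r) -> l = r.
Proof.
  intros Hl Hr H. pose proof (prime_ge2 _ Hl). pose proof (prime_ge2 _ Hr).
  destruct (prime_divisors _ Hr _ H) as [?|[?|[?|?]]]; lia.
Qed.

Lemma prime_dvd_prod l Ds : prime l -> Forall prime Ds -> (l | prodZ Ds) -> In l Ds.
Proof.
  intros Hl. induction Ds as [|a Ds IH]; intros HF H; simpl in *.
  - apply Z.divide_1_r in H. pose proof (prime_ge2 _ Hl). lia.
  - inversion HF; subst. destruct (prime_mult _ Hl _ _ H) as [H1|H1].
    + left. symmetry. apply prime_dvd_prime; auto.
    + right. auto.
Qed.

Lemma prod_split l Ds : NoDup Ds -> Forall prime Ds -> In l Ds ->
  exists D', prodZ Ds = l * D' /\ ~ (l | D') /\ (forall r, prime r -> (r | D') -> In r Ds /\ r <> l).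
Proof.
  intros Hnd HF Hin. induction Ds as [|a Ds IH]; [inversion Hin|].
  inversion Hnd; subst. inversion HF; subst. simpl in Hin.
  destruct Hin as [<- | Hin].
  - exists (prodZ Ds). split; [reflexivity|]. split.
    + intros H. apply H1. apply prime_dvd_prod; auto.
    + intros r Hr Hd. split.
      * right. apply prime_dvd_prod; auto.
      * intros ->. apply H1. apply prime_dvd_prod; auto.
  - destruct (IH H2 H4 Hin) as [D' [E [Hn Hr]]].
    exists (a * D'). split; [simpl; rewrite E; ring|]. split.
    + intros H. assert (Hl : prime l) by (rewrite Forall_forall in H4; auto).
      destruct (prime_mult _ Hl _ _ H) as [H0|H0]; auto.
      apply prime_dvd_prime in H0; auto. subst. contradiction.
    + intros r Hpr Hd. destruct (prime_mult _ Hpr _ _ Hd) as [H0|H0].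
      * apply prime_dvd_prime in H0; auto. subst. split; [left; auto|].
        intros ->. contradiction.
      * destruct (Hr r Hpr H0). split; [right|]; auto.
Qed.

Lemma no_ld p q D d l d' : prime l -> l <> 2 -> ~ (l | D) -> d = l * d' -> ~ (l | d') ->
  ~ Cd_Ql_nonempty p q D d l.
Proof.
  intros Hl Hl2 HD Hd Hd' Hne.
  assert (Hl0 : l <> 0) by (pose proof (prime_ge2 _ Hl); lia).
  destruct (reduce_level _ _ _ _ _ Hl Hne 3%nat) as [z [w [t [Hp Hf]]]].
  change (Z.of_nat 3) with 3 in Hf.
  assert (Hid : Cd_form p q D d z w t = l * (d' * w ^ 2 - l * d' ^ 2 * t ^ 4 - 2 * (p + q) * D * d' * z ^ 2 * t ^ 2) - 4 * D ^ 2 * z ^ 4)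
    by (unfold Cd_form; rewrite Hd; ring).
  assert (Hz : (l | z)).
  { assert (H1 : (l | 4 * D ^ 2 * z ^ 4)).
    { replace (4 * D ^ 2 * z ^ 4) with (l * (d' * w ^ 2 - l * d' ^ 2 * t ^ 4 - 2 * (p + q) * D * d' * z ^ 2 * t ^ 2) - Cd_form p q D d z w t) by (rewrite Hid; ring).
      apply Z.divide_sub_r; [apply Z.divide_factor_l|]. eapply Z.divide_trans; [|exact Hf]. exists (l ^ 2); ring. }
    destruct (Zdivide_dec l z) as [|Hz]; [assumption|]. exfalso. revert H1.
    apply (nd_mul l Hl); [apply (nd_mul l Hl); [apply (nd_4 l Hl Hl2)|apply (nd_pow2 l Hl); exact HD]|apply (nd_pow4 l Hl); exact Hz]. }
  destruct Hz as [z1 ->].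
  assert (Ht : ~ (l | t)).
  { destruct Hp as [Hp|Hp]; [|exact Hp]. exfalso; apply Hp; apply Z.divide_factor_r. }
  assert (Hid2 : Cd_form p q D d (z1 * l) w t = l * d' * w ^ 2 - l ^ 2 * d' ^ 2 * t ^ 4 - l ^ 3 * (2 * (p + q) * D * d' * z1 ^ 2 * t ^ 2 + l * 4 * D ^ 2 * z1 ^ 4))
    by (rewrite Hid; ring).
  assert (Hw : (l | w)).
  { apply (d_pow2 l Hl). apply (d_mul_nd l Hl d'); [|exact Hd'].
    assert (H2 : (l * l | l * (d' * w ^ 2))).
    { replace (l * (d' * w ^ 2)) with (Cd_form p q D d (z1 * l) w t + l ^ 2 * d' ^ 2 * t ^ 4 + l ^ 3 * (2 * (p + q) * D * d' * z1 ^ 2 * t ^ 2 + l * 4 * D ^ 2 * z1 ^ 4)) by (rewrite Hid2; ring).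
      apply Z.divide_add_r; [apply Z.divide_add_r|].
      - eapply Z.divide_trans; [|exact Hf]. exists l; ring.
      - exists (d' ^ 2 * t ^ 4). ring.
      - exists (l * (2 * (p + q) * D * d' * z1 ^ 2 * t ^ 2 + l * 4 * D ^ 2 * z1 ^ 4)). ring. }
    apply Z.mul_divide_cancel_l in H2; [exact H2|exact Hl0]. }
  destruct Hw as [w1 ->].
  apply (nd_mul l Hl (d' ^ 2) (t ^ 4)); [apply (nd_pow2 l Hl); exact Hd'|apply (nd_pow4 l Hl); exact Ht|].
  assert (H3 : (l ^ 2 * l | l ^ 2 * (d' ^ 2 * t ^ 4))).
  { replace (l ^ 2 * (d' ^ 2 * t ^ 4)) with (- Cd_form p q D d (z1 * l) (w1 * l) t + l ^ 3 * (d' * w1 ^ 2 - (2 * (p + q) * D * d' * z1 ^ 2 * t ^ 2 + l * 4 * D ^ 2 * z1 ^ 4))) by (rewrite Hid2; ring).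
    replace (l ^ 2 * l) with (l ^ 3) by ring.
    apply Z.divide_add_r; [apply Z.divide_opp_r; exact Hf|apply Z.divide_factor_l]. }
  destruct H3 as [k Hk]. exists k. apply (Z.mul_reg_l _ _ (l ^ 2)); [apply Z.pow_nonzero; clear -Hl0; lia|].
  rewrite Hk; ring.
Qed.


From Stdlib Require Import ZArith Znumtheory List Lia.
Open Scope Z_scope.

Lemma dv_opp a b : (a | - b) -> (a | b).
Proof. intros [k Hk]; exists (- k); lia. Qed.

Lemma nd_prime_other l r : prime l -> prime r -> l <> r -> ~ (l | r).
Proof. intros Hl Hr Hne H. apply Hne. apply prime_dvd_prime; auto. Qed.

Theorem proposition2p5 (p q : Z) (Ds : list Z) :
  prime p -> prime q -> p <> 2 -> q - p = 2 ->
  Ds <> nil -> NoDup Ds -> Forall prime Ds ->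
  ~ (2 | prodZ Ds) -> ~ (p | prodZ Ds) -> ~ (q | prodZ Ds) ->
  let D := prodZ Ds in
  (* (A) *)
  (forall d, in_QS2 p q Ds d -> ((p | d) \/ (q | d) \/ d = -1) ->
     ~ in_Sphi p q Ds d) /\
  (* (B1) *)
  (Cd_Ql_nonempty p q D 2 2 <-> (D * (D + 2 * p + 2)) mod 16 = 1) /\
  (forall l, prime l -> (l | p * q * D) ->
     (Cd_Ql_nonempty p q D 2 l <-> legendre_one 2 l) /\
     (Cd_Ql_nonempty p q D 2 l <-> l mod 8 = 1 \/ l mod 8 = 7)) /\
  (* (B2) *)
  (Cd_Ql_nonempty p q D (-2) 2 <-> (D * (- D + 2 * p + 2)) mod 16 = 3) /\
  (forall l, prime l -> (l | p * q * D) ->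
     (Cd_Ql_nonempty p q D (-2) l <-> legendre_one (-2) l) /\
     (Cd_Ql_nonempty p q D (-2) l <-> l mod 8 = 1 \/ l mod 8 = 3)) /\
  (* (C1) and (C2) *)
  (forall Di, In Di Ds ->
     let Dhat := D / Di in
     ((Cd_Ql_nonempty p q D Di 2 <-> Di mod 4 = 1) /\
      (forall l, prime l -> (l | p * q * Dhat) ->
         (Cd_Ql_nonempty p q D Di l <-> legendre_one Di l)) /\
      (Cd_Ql_nonempty p q D Di Di <->
         legendre_one (- p * Dhat) Di /\ legendre_one (- q * Dhat) Di)) /\
     ((Cd_Ql_nonempty p q D (- Di) 2 <-> Di mod 4 = 3) /\
      (forall l, prime l -> (l | p * q * Dhat) ->
         (Cd_Ql_nonempty p q D (- Di) l <-> legendre_one (- Di) l)) /\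
      (Cd_Ql_nonempty p q D (- Di) Di <->
         legendre_one (p * Dhat) Di /\ legendre_one (q * Dhat) Di))).
Proof.
  intros Hp Hq Hp2 Hqp Hne Hnd HF H2D HpD HqD D.
  assert (Hq' : q = p + 2) by lia.
  pose proof (prime_ge2 _ Hp) as Hp_ge. pose proof (prime_ge2 _ Hq) as Hq_ge.
  assert (Hq2 : q <> 2) by lia.
  assert (Hp2' : ~ (2 | p)) by (intros H; apply Hp2; symmetry; apply prime_dvd_prime; auto; exact prime_2).
  assert (Hpq : ~ (p | q)) by (apply nd_prime_other; auto; lia).
  assert (Hqp' : ~ (q | p)) by (apply nd_prime_other; auto; lia).
  assert (HDs : forall l, In l Ds -> prime l /\ l <> 2 /\ l <> p /\ l <> q /\
     exists D', D = l * D' /\ ~ (l | D') /\ (forall r, prime r -> (r | D') -> In r Ds /\ r <> l)).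
  { intros l Hl. assert (Hlp : prime l) by (rewrite Forall_forall in HF; auto).
    destruct (prod_split l Ds Hnd HF Hl) as [D' [E [Hn Hr]]].
    assert (HlD : (l | D)) by (exists D'; unfold D; rewrite E; ring).
    split; auto. split; [intros ->; auto|]. split; [intros ->; auto|]. split; [intros ->; auto|].
    exists D'. auto. }
  assert (GEN : forall d l, prime l -> (l | p * q * D) -> ~ (l | d) ->
     (Cd_Ql_nonempty p q D d l <-> legendre_one d l)).
  { intros d l Hl Hdiv Hld.
    destruct (prime_mult _ Hl _ _ Hdiv) as [H1|H1].
    - destruct (prime_mult _ Hl _ _ H1) as [H2|H2].
      + apply prime_dvd_prime in H2; auto. subst l.
        apply (odd_pq p Hp Hp2 p q D d q); auto.
      + apply prime_dvd_prime in H2; auto. subst l.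
        apply (odd_pq q Hq Hq2 p q D d p); auto. ring.
    - apply prime_dvd_prod in H1; auto.
      destruct (HDs l H1) as [_ [Hl2 [_ [_ [D' [E [Hn _]]]]]]].
      apply (odd_D l Hl Hl2 p q D d D'); auto. }
  assert (Hlodd : forall l, prime l -> (l | p * q * D) -> l <> 2).
  { intros l Hl Hdiv. destruct (prime_mult _ Hl _ _ Hdiv) as [H1|H1].
    - destruct (prime_mult _ Hl _ _ H1) as [H2|H2]; apply prime_dvd_prime in H2; auto; subst; auto.
    - apply prime_dvd_prod in H1; auto. apply HDs; auto. }
  split; [|split; [|split; [|split; [|split]]]].
  -
    intros d [Hd0 [Hsq Hpl]] Hcase [_ [_ Hloc]].
    destruct Hcase as [[d' Hd']|[[d' Hd']|Hd']].
    + apply (no_ld p q D d p d' Hp Hp2 HpD); [rewrite Hd'; ring| |].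
      * intros [k Hk]. apply (Hsq p Hp). exists k. rewrite Hd', Hk. ring.
      * apply Hloc. right; left; auto.
    + apply (no_ld p q D d q d' Hq Hq2 HqD); [rewrite Hd'; ring| |].
      * intros [k Hk]. apply (Hsq q Hq). exists k. rewrite Hd', Hk. ring.
      * apply Hloc. right; right; left; auto.
    + subst d. assert (Hm1 : forall l, prime l -> l <> 2 -> ~ (l | -1)).
      { intros l Hl Hl2 H. apply (nd_eps l Hl Hl2 (-1)); auto. }
      assert (Hp4 : p mod 4 = 3 \/ q mod 4 = 3).
      { destruct (not2_odd _ Hp2') as [a Ha]. rewrite Hq', Ha.
        pose proof (Z.mod_pos_bound (2 * a + 1) 4). pose proof (Z.div_mod (2 * a + 1) 4).
        pose proof (Z.mod_pos_bound (2 * a + 1 + 2) 4). pose proof (Z.div_mod (2 * a + 1 + 2) 4). lia. }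
      destruct Hp4 as [H4|H4].
      * apply (leg_m1 p Hp H4). apply (odd_pq p Hp Hp2 p q D (-1) q); auto.
        apply Hloc. right; left; auto.
      * apply (leg_m1 q Hq H4). apply (odd_pq q Hq Hq2 p q D (-1) p); auto. ring.
        apply Hloc. right; right; left; auto.
  - apply two_B1; auto.
  - intros l Hl Hdiv. assert (Hl2 : l <> 2) by (apply Hlodd; auto).
    assert (E : Cd_Ql_nonempty p q D 2 l <-> legendre_one 2 l) by (apply GEN; auto; apply nd2; auto).
    split; auto. rewrite E. apply leg_pm2; auto.
  - apply two_B2; auto.
  - intros l Hl Hdiv. assert (Hl2 : l <> 2) by (apply Hlodd; auto).
    assert (E : Cd_Ql_nonempty p q D (-2) l <-> legendre_one (-2) l).
    { apply GEN; auto. intros H. apply (nd2 l Hl Hl2). apply (dv_opp l 2) in H. exact H. }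
    split; auto. rewrite E. apply leg_pm2; auto.
  - intros Di HDi Dhat.
    destruct (HDs Di HDi) as [HDip [HDi2 [HDip' [HDiq [D' [E [Hn Hr]]]]]]].
    assert (EDh : Dhat = D') by (unfold Dhat; rewrite E; rewrite Z.mul_comm, Z.div_mul; auto; pose proof (prime_ge2 _ HDip); lia).
    rewrite EDh.
    assert (HDiodd : ~ (2 | Di)) by (intros H; apply H2D; fold D; rewrite E; apply Z.divide_mul_l; auto).
    assert (Hndp : ~ (Di | p)) by (apply nd_prime_other; auto).
    assert (Hndq : ~ (Di | q)) by (apply nd_prime_other; auto).
    assert (Hl_case : forall l, prime l -> (l | p * q * D') -> (l | p * q * D) /\ ~ (l | Di)).
    { intros l Hl Hdiv. split.
      - rewrite E. replace (p * q * (Di * D')) with ((p * q * D') * Di) by ring. apply Z.divide_mul_l; auto.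
      - intros HlDi. apply prime_dvd_prime in HlDi; auto. subst l.
        destruct (prime_mult _ Hl _ _ Hdiv) as [H1|H1].
        + destruct (prime_mult _ Hl _ _ H1) as [H2|H2]; contradiction.
        + apply Hn; auto. }
    split; split; [| split | | split].
    + apply two_C; auto.
    + intros l Hl Hdiv. destruct (Hl_case l Hl Hdiv) as [H1 H2]. apply GEN; auto.
    + pose proof (odd_Di Di HDip HDi2 p q D Di D' 1 Hq' ltac:(auto) E Hn ltac:(ring) Hndp Hndq) as X.
      replace (- p * D') with (- (1) * p * D') by ring. replace (- q * D') with (- (1) * q * D') by ring. exact X.
    + rewrite (two_C p q D (- Di)); auto.
      * pose proof (Z.mod_pos_bound Di 4). pose proof (Z.div_mod Di 4).
        pose proof (Z.mod_pos_bound (- Di) 4). pose proof (Z.div_mod (- Di) 4). lia.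
      * intros H. apply HDiodd. apply dv_opp in H. exact H.
    + intros l Hl Hdiv. destruct (Hl_case l Hl Hdiv) as [H1 H2]. apply GEN; auto.
      intros H. apply H2. apply dv_opp in H. exact H.
    + pose proof (odd_Di Di HDip HDi2 p q D (- Di) D' (-1) Hq' ltac:(auto) E Hn ltac:(ring) Hndp Hndq) as X.
      replace (p * D') with (- (-1) * p * D') by ring. replace (q * D') with (- (-1) * q * D') by ring. exact X.
Qed.
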